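(* Let $A$ be a self-contained band operator on $\ell^2(\mathbb{Z})$. Then $\nu(A)=\nu(A^* )$, and \[ \nu_N(A)\searrow\nu(A)=\frac{1}{\|A^{-1}\|}\qquad\text{as }N\to\infty. \]
   Context: A band operator on $\ell^2(\mathbb{Z})$ is a bounded operator with matrix entries $A_{ij}=0$ for $|i-j|>w$ (some $w$). For $N\in\mathbb{N}$, an $N$-column submatrix of $A$ is $C=(C_{ij})_{i\in1-w..N+w,\,j\in1..N}$ with $C_{ij}=A_{k+i,k+j}$ for some $k\in\mathbb{Z}$ (where $a..b=\{n\in\mathbb{Z}:a\le n\le b\}$); $A$ is self-contained if each such submatrix (for every $N$) occurs for infinitely many $k$. $\nu(A):=\inf\{\|Ax\|:\|x\|=1\}$; $\nu_N(A):=\inf\{\|Ax\|:\|x\|=1,\operatorname{diam}(\operatorname{supp}x)<N\}$. Convention: $\|A^{-1}\|:=\infty$ if $A$ is not invertible and $1/\infty=0$. *)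

(* Defs.v *)
From Stdlib Require Import Reals Lra ZArith ClassicalEpsilon.
From Coquelicot Require Import Coquelicot.
Open Scope R_scope.

Definition seqZ := Z -> C.

(* Sum over Z of |x_i|^2, written as a series over nat pairing i = n and i = -n-1. *)
Definition sq_terms (x : seqZ) (n : nat) : R :=
  (Cmod (x (Z.of_nat n)))^2 + (Cmod (x (- Z.of_nat n - 1)%Z))^2.

Definition in_l2 (x : seqZ) : Prop := ex_series (sq_terms x).

Definition l2norm (x : seqZ) : R := sqrt (Series (sq_terms x)).

Definition matZ := Z -> Z -> C.

Definition banded (a : matZ) (w : nat) : Prop :=
  forall i j : Z, (Z.of_nat w < Z.abs (i - j))%Z -> a i j = 0%C.

Fixpoint csum (n : nat) (f : nat -> C) : C :=
  match n with
  | O => 0%C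
  | S n' => Cplus (csum n' f) (f n')
  end.

(* Action of a w-banded matrix on a sequence: (Ax)_i = sum_{j=i-w}^{i+w} A_ij x_j
   (all other terms vanish by bandedness). *)
Definition bapply (a : matZ) (w : nat) (x : seqZ) : seqZ :=
  fun i => csum (2 * w + 1)
    (fun m => Cmult (a i (i - Z.of_nat w + Z.of_nat m)%Z)
                    (x (i - Z.of_nat w + Z.of_nat m)%Z)).

Definition band_operator (a : matZ) (w : nat) : Prop :=
  banded a w /\
  exists M : R, forall x : seqZ, in_l2 x ->
    in_l2 (bapply a w x) /\ l2norm (bapply a w x) <= M * l2norm x.

Definition adjmat (a : matZ) : matZ := fun i j => Cconj (a j i).

Definition same_submatrix (a : matZ) (w N : nat) (k k' : Z) : Prop :=
  forall i j : Z,
    (1 - Z.of_nat w <= i <= Z.of_nat N + Z.of_nat w)%Z ->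
    (1 <= j <= Z.of_nat N)%Z ->
    a (k' + i)%Z (k' + j)%Z = a (k + i)%Z (k + j)%Z.

Definition self_contained (a : matZ) (w : nat) : Prop :=
  forall (N : nat) (k : Z) (M : Z),
    exists k' : Z, (M < Z.abs k')%Z /\ same_submatrix a w N k k'.

Definition nu (a : matZ) (w : nat) : R :=
  real (Glb_Rbar (fun r => exists x : seqZ,
          in_l2 x /\ l2norm x = 1 /\ r = l2norm (bapply a w x))).

Definition nuN (a : matZ) (w : nat) (N : nat) : R :=
  real (Glb_Rbar (fun r => exists x : seqZ,
          in_l2 x /\ l2norm x = 1 /\
          (forall i j : Z, x i <> 0%C -> x j <> 0%C -> (Z.abs (i - j) < Z.of_nat N)%Z) /\
          r = l2norm (bapply a w x))).

Definition invertible (a : matZ) (w : nat) : Prop :=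
  forall y : seqZ, in_l2 y ->
    exists x : seqZ, in_l2 x /\ (forall i, bapply a w x i = y i) /\
      forall x' : seqZ, in_l2 x' -> (forall i, bapply a w x' i = y i) ->
        forall i, x' i = x i.

(* ||A^{-1}|| = sup { ||A^{-1} y|| : ||y|| = 1 }, where A^{-1} y is the
   (unique, when A is invertible) x in l^2 with Ax = y. *)
Definition inv_norm (a : matZ) (w : nat) : Rbar :=
  Lub_Rbar (fun r => exists y : seqZ, in_l2 y /\ l2norm y = 1 /\
     exists x : seqZ, in_l2 x /\ (forall i, bapply a w x i = y i) /\ r = l2norm x).

(* 1 / ||A^{-1}||, with ||A^{-1}|| := oo if A is not invertible, and 1/oo = 0. *)
Definition recip_inv_norm (a : matZ) (w : nat) : R :=
  if excluded_middle_informative (invertible a w) then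
    match inv_norm a w with
    | Finite r => 1 / r
    | _ => 0
    end
  else 0.

(* Main.v *)
Require Import Defs.
From Stdlib Require Import Reals Lra Lia ZArith ClassicalEpsilon FunctionalExtensionality Classical.
From Coquelicot Require Import Coquelicot.
Open Scope R_scope.


Fixpoint rsum (n : nat) (f : nat -> R) : R :=
  match n with O => 0 | S n' => rsum n' f + f n' end.

Lemma rsum_ext n f g : (forall k, (k < n)%nat -> f k = g k) -> rsum n f = rsum n g.
Proof. induction n; simpl; intros H; auto. rewrite IHn by (intros; apply H; lia). rewrite H by lia. auto. Qed.
Lemma rsum_plus n f g : rsum n (fun k => f k + g k) = rsum n f + rsum n g.
Proof. induction n; simpl; [lra|rewrite IHn; lra]. Qed.
Lemma rsum_scal n c f : rsum n (fun k => c * f k) = c * rsum n f.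
Proof. induction n; simpl; [lra|rewrite IHn; lra]. Qed.
Lemma rsum_opp n f : rsum n (fun k => - f k) = - rsum n f.
Proof. induction n; simpl; [lra|rewrite IHn; lra]. Qed.
Lemma rsum_le n f g : (forall k, (k<n)%nat -> f k <= g k) -> rsum n f <= rsum n g.
Proof. induction n; simpl; intros H; [lra|]. assert (H1 := H n ltac:(lia)).
  assert (rsum n f <= rsum n g) by (apply IHn; intros; apply H; lia). lra. Qed.
Lemma rsum_zero n f : (forall k, (k<n)%nat -> f k = 0) -> rsum n f = 0.
Proof. induction n; simpl; intros H; [lra|]. rewrite IHn by (intros; apply H; lia). rewrite H by lia. lra. Qed.
Lemma rsum_nonneg n f : (forall k, (k<n)%nat -> 0 <= f k) -> 0 <= rsum n f.
Proof. intros H. rewrite <- (rsum_zero n (fun _ => 0)) by auto. apply rsum_le. auto. Qed.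
Lemma rsum_split a b f : rsum (a + b) f = rsum a f + rsum b (fun k => f (a + k)%nat).
Proof. induction b; simpl. rewrite Nat.add_0_r; lra. rewrite Nat.add_succ_r; simpl; rewrite IHb; lra. Qed.
Lemma rsum_swap n m F : rsum n (fun i => rsum m (fun j => F i j)) = rsum m (fun j => rsum n (fun i => F i j)).
Proof. induction n; simpl. rewrite rsum_zero; auto. rewrite IHn, <- rsum_plus. auto. Qed.
Lemma rsum_abs n f : Rabs (rsum n f) <= rsum n (fun k => Rabs (f k)).
Proof. induction n; simpl. rewrite Rabs_R0; lra. eapply Rle_trans. apply Rabs_triang. lra. Qed.
Lemma sum_n_rsum a n : sum_n a n = rsum (S n) a.
Proof. induction n. simpl. rewrite sum_O. lra. rewrite sum_Sn, IHn. simpl. reflexivity. Qed.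

Definition zsum (lo hi : Z) (f : Z -> R) : R :=
  rsum (Z.to_nat (hi - lo)) (fun t => f (lo + Z.of_nat t)%Z).

Lemma zsum_split lo m hi f : (lo <= m <= hi)%Z -> zsum lo hi f = zsum lo m f + zsum m hi f.
Proof. intros H. unfold zsum.
  replace (Z.to_nat (hi - lo)) with (Z.to_nat (m - lo) + Z.to_nat (hi - m))%nat by lia.
  rewrite rsum_split. f_equal. apply rsum_ext. intros k _. f_equal. lia. Qed.
Lemma zsum_nil lo hi f : (hi <= lo)%Z -> zsum lo hi f = 0.
Proof. intros H. unfold zsum. replace (Z.to_nat (hi - lo)) with O by lia. reflexivity. Qed.
Lemma zsum_one lo f : zsum lo (lo+1) f = f lo.
Proof. unfold zsum. replace (Z.to_nat (lo + 1 - lo)) with 1%nat by lia. simpl. rewrite Z.add_0_r. lra. Qed.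
Lemma zsum_snoc lo hi f : (lo <= hi)%Z -> zsum lo (hi+1) f = zsum lo hi f + f hi.
Proof. intros H. rewrite (zsum_split lo hi) by lia. rewrite zsum_one. auto. Qed.
Lemma zsum_ext lo hi f g : (forall i, (lo <= i < hi)%Z -> f i = g i) -> zsum lo hi f = zsum lo hi g.
Proof. intros H. unfold zsum. apply rsum_ext. intros k Hk. apply H. lia. Qed.
Lemma zsum_plus lo hi f g : zsum lo hi (fun i => f i + g i) = zsum lo hi f + zsum lo hi g.
Proof. apply rsum_plus. Qed.
Lemma zsum_scal lo hi c f : zsum lo hi (fun i => c * f i) = c * zsum lo hi f.
Proof. apply rsum_scal. Qed.
Lemma zsum_opp lo hi f : zsum lo hi (fun i => - f i) = - zsum lo hi f.
Proof. apply rsum_opp. Qed.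
Lemma zsum_le lo hi f g : (forall i, (lo <= i < hi)%Z -> f i <= g i) -> zsum lo hi f <= zsum lo hi g.
Proof. intros H. apply rsum_le. intros k Hk. apply H. lia. Qed.
Lemma zsum_zero lo hi f : (forall i, (lo <= i < hi)%Z -> f i = 0) -> zsum lo hi f = 0.
Proof. intros H. apply rsum_zero. intros k Hk. apply H. lia. Qed.
Lemma zsum_nonneg lo hi f : (forall i, (lo <= i < hi)%Z -> 0 <= f i) -> 0 <= zsum lo hi f.
Proof. intros H. apply rsum_nonneg. intros k Hk. apply H. lia. Qed.
Lemma zsum_swap lo1 hi1 lo2 hi2 F :
  zsum lo1 hi1 (fun i => zsum lo2 hi2 (fun j => F i j)) = zsum lo2 hi2 (fun j => zsum lo1 hi1 (fun i => F i j)).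
Proof. unfold zsum. apply rsum_swap. Qed.
Lemma zsum_abs lo hi f : Rabs (zsum lo hi f) <= zsum lo hi (fun i => Rabs (f i)).
Proof. apply rsum_abs. Qed.
Lemma zsum_shift lo hi s f : zsum lo hi (fun i => f (i + s)%Z) = zsum (lo + s) (hi + s) f.
Proof. unfold zsum. replace (hi + s - (lo + s))%Z with (hi - lo)%Z by lia. apply rsum_ext. intros k _. f_equal. lia. Qed.
Lemma zsum_supp lo hi a b f : (lo <= a)%Z -> (a <= b)%Z -> (b <= hi)%Z ->
  (forall i, (lo <= i < hi)%Z -> (i < a \/ b <= i)%Z -> f i = 0) -> zsum lo hi f = zsum a b f.
Proof. intros H1 H2 H3 H. rewrite (zsum_split lo a hi) by lia. rewrite (zsum_split a b hi) by lia.
  rewrite (zsum_zero lo a), (zsum_zero b hi). lra. all: intros; apply H; lia. Qed.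
Lemma zsum_mono lo hi a b f : (lo <= a)%Z -> (a <= b)%Z -> (b <= hi)%Z ->
  (forall i, (lo <= i < hi)%Z -> 0 <= f i) -> zsum a b f <= zsum lo hi f.
Proof. intros H1 H2 H3 H. rewrite (zsum_split lo a hi) by lia. rewrite (zsum_split a b hi) by lia.
  assert (0 <= zsum lo a f) by (apply zsum_nonneg; intros; apply H; lia).
  assert (0 <= zsum b hi f) by (apply zsum_nonneg; intros; apply H; lia). lra. Qed.
Lemma zsum_single lo hi i0 f : (lo <= i0 < hi)%Z -> (forall i, (lo <= i < hi)%Z -> i <> i0 -> f i = 0) ->
  zsum lo hi f = f i0.
Proof. intros H1 H. rewrite (zsum_supp lo hi i0 (i0+1)) by (try lia; intros; apply H; lia).
  apply zsum_one. Qed.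

Definition czsum (lo hi : Z) (f : Z -> C) : C :=
  (zsum lo hi (fun i => fst (f i)), zsum lo hi (fun i => snd (f i))).

Lemma csum_pair n g : csum n g = (rsum n (fun m => fst (g m)), rsum n (fun m => snd (g m))).
Proof. induction n; simpl. reflexivity. rewrite IHn. reflexivity. Qed.

Lemma bapply_czsum a w x i :
  bapply a w x i = czsum (i - Z.of_nat w) (i + Z.of_nat w + 1) (fun j => (a i j * x j)%C).
Proof. unfold bapply, czsum, zsum. rewrite csum_pair.
  replace (Z.to_nat (i + Z.of_nat w + 1 - (i - Z.of_nat w))) with (2 * w + 1)%nat by lia.
  reflexivity. Qed.

Lemma czsum_ext lo hi (f g : Z -> C) : (forall i, (lo <= i < hi)%Z -> f i = g i) -> czsum lo hi f = czsum lo hi g.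
Proof. intros H. unfold czsum. f_equal; apply zsum_ext; intros; rewrite H; auto. Qed.
Lemma czsum_supp lo hi a b (f : Z -> C) : (lo <= a)%Z -> (a <= b)%Z -> (b <= hi)%Z ->
  (forall i, (lo <= i < hi)%Z -> (i < a \/ b <= i)%Z -> f i = 0%C) -> czsum lo hi f = czsum a b f.
Proof. intros H1 H2 H3 H. unfold czsum. f_equal; apply zsum_supp; auto; intros; rewrite H; auto. Qed.
Lemma czsum_zero lo hi (f : Z -> C) : (forall i, (lo <= i < hi)%Z -> f i = 0%C) -> czsum lo hi f = 0%C.
Proof. intros H. unfold czsum. rewrite !zsum_zero; auto; intros; rewrite H; auto. Qed.
Lemma czsum_plus lo hi f g : czsum lo hi (fun i => f i + g i)%C = (czsum lo hi f + czsum lo hi g)%C.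
Proof. unfold czsum. simpl. rewrite !zsum_plus. reflexivity. Qed.
Lemma czsum_scal lo hi c f : czsum lo hi (fun i => c * f i)%C = (c * czsum lo hi f)%C.
Proof. unfold czsum, Cmult. simpl. f_equal.
  - rewrite (zsum_ext _ _ _ (fun i => fst c * fst (f i) + - (snd c * snd (f i)))) by (intros; lra).
    rewrite zsum_plus, zsum_opp, !zsum_scal. lra.
  - rewrite zsum_plus, !zsum_scal. lra. Qed.
Lemma czsum_swap lo1 hi1 lo2 hi2 F :
  czsum lo1 hi1 (fun i => czsum lo2 hi2 (fun j => F i j)) = czsum lo2 hi2 (fun j => czsum lo1 hi1 (fun i => F i j)).
Proof. unfold czsum. simpl. f_equal; apply zsum_swap. Qed.
Lemma czsum_single lo hi i0 (f : Z -> C) : (lo <= i0 < hi)%Z -> (forall i, (lo <= i < hi)%Z -> i <> i0 -> f i = 0%C) ->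
  czsum lo hi f = f i0.
Proof. intros H1 H. unfold czsum. rewrite !(zsum_single lo hi i0) by (auto; intros; rewrite H; auto).
  symmetry; apply surjective_pairing. Qed.
Lemma czsum_shift lo hi s f : czsum lo hi (fun i => f (i + s)%Z) = czsum (lo + s) (hi + s) f.
Proof. unfold czsum. f_equal; rewrite <- zsum_shift; auto. Qed.


Definition dotC (u v : C) : R := fst u * fst v + snd u * snd v.
Definition nsq lo hi (x : seqZ) := zsum lo hi (fun i => Cmod (x i) ^ 2).
Definition ip lo hi (x z : seqZ) := zsum lo hi (fun i => dotC (x i) (z i)).
Definition vadd (x y : seqZ) : seqZ := fun i => (x i + y i)%C.
Definition vscal (c : C) (x : seqZ) : seqZ := fun i => (c * x i)%C.
Definition vsub (x y : seqZ) : seqZ := fun i => (x i - y i)%C.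
Definition vzero : seqZ := fun _ => 0%C.

Lemma Cmod2 u : Cmod u ^ 2 = fst u ^ 2 + snd u ^ 2.
Proof. apply Cmod2_alt. Qed.
Lemma Cmod2_dot u : Cmod u ^ 2 = dotC u u.
Proof. rewrite Cmod2. unfold dotC. ring. Qed.
Lemma Cmod_sq_nonneg u : 0 <= Cmod u ^ 2.
Proof. apply pow2_ge_0. Qed.

Lemma dotC_le u v : dotC u v <= Cmod u * Cmod v.
Proof. unfold Cmod, dotC. rewrite <- sqrt_mult by (apply Rplus_le_le_0_compat; apply pow2_ge_0).
  destruct (Rle_or_lt (fst u * fst v + snd u * snd v) 0) as [H|H].
  - pose proof (sqrt_pos ((fst u ^ 2 + snd u ^ 2) * (fst v ^ 2 + snd v ^ 2))). lra.
  - rewrite <- (sqrt_square (fst u * fst v + snd u * snd v)) at 1 by lra.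
    apply sqrt_le_1_alt. pose proof (pow2_ge_0 (fst u * snd v - snd u * fst v)). nra. Qed.
Lemma dotC_sym u v : dotC u v = dotC v u.
Proof. unfold dotC; ring. Qed.
Lemma dotC_plus_l u1 u2 v : dotC (u1 + u2)%C v = dotC u1 v + dotC u2 v.
Proof. unfold dotC; simpl; ring. Qed.
Lemma dotC_mult u x z : dotC (u * x)%C z = dotC x (Cconj u * z)%C.
Proof. unfold dotC; simpl; ring. Qed.
Lemma Cmod2_plus u v : Cmod (u + v)%C ^ 2 = Cmod u ^ 2 + 2 * dotC u v + Cmod v ^ 2.
Proof. rewrite !Cmod2. unfold dotC; simpl; ring. Qed.

Lemma dotC_czsum lo hi f v : dotC (czsum lo hi f) v = zsum lo hi (fun i => dotC (f i) v).
Proof. unfold dotC, czsum; simpl. rewrite Rmult_comm, <- zsum_scal, (Rmult_comm _ (snd v)), <- zsum_scal, <- zsum_plus.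
  apply zsum_ext; intros; ring. Qed.

Lemma CS_real lo hi p q : zsum lo hi (fun i => p i * q i) <=
  sqrt (zsum lo hi (fun i => p i ^ 2)) * sqrt (zsum lo hi (fun i => q i ^ 2)).
Proof.
  set (S := zsum lo hi (fun i => p i * q i)).
  set (P := zsum lo hi (fun i => p i ^ 2)). set (Q := zsum lo hi (fun i => q i ^ 2)).
  assert (HP : 0 <= P) by (apply zsum_nonneg; intros; apply pow2_ge_0).
  assert (HQ : 0 <= Q) by (apply zsum_nonneg; intros; apply pow2_ge_0).
  assert (key : forall l, 0 < l -> 2 * l * S <= P + l ^ 2 * Q).
  { intros l Hl. unfold S, P, Q. rewrite <- zsum_scal, <- zsum_scal, <- zsum_plus.
    apply zsum_le. intros i _. pose proof (pow2_ge_0 (p i - l * q i)). nra. }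
  pose proof (sqrt_pos P). pose proof (sqrt_pos Q).
  destruct (Rle_or_lt S 0) as [HS|HS]. { nra. }
  destruct (Req_dec Q 0) as [HQ0|HQ0].
  { exfalso. pose proof (key ((P + 1) / S) ltac:(apply Rdiv_lt_0_compat; lra)).
    rewrite HQ0 in H1. assert (2 * ((P + 1) / S) * S = 2 * (P+1)) by (field; lra). rewrite Rmult_0_r in H1. lra. }
  destruct (Req_dec P 0) as [HP0|HP0].
  { exfalso. assert (Hl : 0 < S / (Q + 1)) by (apply Rdiv_lt_0_compat; lra).
    pose proof (key (S / (Q + 1)) Hl). set (l := S / (Q + 1)) in *.
    assert (E : l * (Q + 1) = S) by (unfold l; field; lra).
    rewrite HP0 in H1. nra. }
  assert (0 < sqrt P) by (apply sqrt_lt_R0; lra). assert (0 < sqrt Q) by (apply sqrt_lt_R0; lra).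
  pose proof (key (sqrt P / sqrt Q) ltac:(apply Rdiv_lt_0_compat; lra)).
  replace ((sqrt P / sqrt Q) ^ 2 * Q) with P in H3.
  2:{ unfold Rdiv. rewrite Rpow_mult_distr, pow_inv. rewrite !pow2_sqrt by lra. field. auto. }
  assert (S * (sqrt P / sqrt Q) <= P) by lra.
  apply (Rmult_le_reg_r (sqrt P / sqrt Q)). apply Rdiv_lt_0_compat; lra.
  replace (sqrt P * sqrt Q * (sqrt P / sqrt Q)) with (sqrt P * sqrt P) by (field; lra).
  rewrite sqrt_sqrt; lra.
Qed.

Lemma CS lo hi x z : ip lo hi x z <= sqrt (nsq lo hi x) * sqrt (nsq lo hi z).
Proof. eapply Rle_trans. apply zsum_le. intros; apply dotC_le. apply CS_real. Qed.

Lemma nsq_nonneg lo hi x : 0 <= nsq lo hi x.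
Proof. apply zsum_nonneg. intros; apply Cmod_sq_nonneg. Qed.

Lemma nsq_add lo hi x y : nsq lo hi (vadd x y) = nsq lo hi x + 2 * ip lo hi x y + nsq lo hi y.
Proof. unfold nsq, ip, vadd. rewrite <- zsum_scal, <- !zsum_plus. apply zsum_ext. intros. apply Cmod2_plus. Qed.

Lemma Minkowski lo hi x y : sqrt (nsq lo hi (vadd x y)) <= sqrt (nsq lo hi x) + sqrt (nsq lo hi y).
Proof. pose proof (nsq_nonneg lo hi x). pose proof (nsq_nonneg lo hi y). pose proof (nsq_nonneg lo hi (vadd x y)).
  pose proof (sqrt_pos (nsq lo hi x)). pose proof (sqrt_pos (nsq lo hi y)).
  rewrite <- (sqrt_square (sqrt (nsq lo hi x) + sqrt (nsq lo hi y))) by lra.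
  apply sqrt_le_1_alt. rewrite nsq_add. pose proof (CS lo hi x y).
  replace ((sqrt (nsq lo hi x) + sqrt (nsq lo hi y)) * (sqrt (nsq lo hi x) + sqrt (nsq lo hi y)))
   with (sqrt (nsq lo hi x) * sqrt (nsq lo hi x) + 2 * (sqrt (nsq lo hi x) * sqrt (nsq lo hi y)) + sqrt (nsq lo hi y) * sqrt (nsq lo hi y)) by ring.
  rewrite !sqrt_sqrt by lra. lra. Qed.

Lemma nsq_scal lo hi c x : nsq lo hi (vscal c x) = Cmod c ^ 2 * nsq lo hi x.
Proof. unfold nsq, vscal. rewrite <- zsum_scal. apply zsum_ext. intros. rewrite Cmod_mult. ring. Qed.


Definition N2 (x : seqZ) := Series (sq_terms x).

Lemma sq_terms_nonneg x n : 0 <= sq_terms x n.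
Proof. unfold sq_terms. pose proof (Cmod_sq_nonneg (x (Z.of_nat n))). pose proof (Cmod_sq_nonneg (x (- Z.of_nat n - 1)%Z)). lra. Qed.

Lemma rsum_sq_terms x n : rsum n (sq_terms x) = nsq (- Z.of_nat n) (Z.of_nat n) x.
Proof. induction n.
  - simpl. unfold nsq. rewrite zsum_nil; auto. lia.
  - simpl rsum. rewrite IHn. unfold nsq.
    rewrite (zsum_split (- Z.of_nat (S n)) (- Z.of_nat n) (Z.of_nat (S n))) by lia.
    assert (E1 : forall f, zsum (- Z.of_nat (S n)) (- Z.of_nat n) f = f (- Z.of_nat n - 1)%Z).
    { intros f. replace (- Z.of_nat n)%Z with (- Z.of_nat (S n) + 1)%Z by lia. rewrite zsum_one. f_equal. lia. }
    rewrite E1. replace (Z.of_nat (S n)) with (Z.of_nat n + 1)%Z by lia.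
    rewrite zsum_snoc by lia. unfold sq_terms. lra.
Qed.

Lemma series_lim a : ex_series a -> is_lim_seq (sum_n a) (Series a).
Proof. intros H. apply Series_correct in H. exact H. Qed.

Lemma l2_lim x : in_l2 x -> is_lim_seq (fun n => rsum n (sq_terms x)) (N2 x).
Proof. intros H. apply is_lim_seq_incr_1. eapply is_lim_seq_ext. 2: apply series_lim, H.
  intros n. simpl. rewrite sum_n_rsum. reflexivity. Qed.

Lemma rsum_incr f : (forall n, 0 <= f n) -> forall n, rsum n f <= rsum (S n) f.
Proof. intros H n. simpl. pose proof (H n). lra. Qed.

Lemma l2_rsum_le x n : in_l2 x -> rsum n (sq_terms x) <= N2 x.
Proof. intros H. apply (is_lim_seq_incr_compare (fun n => rsum n (sq_terms x))). apply l2_lim, H.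
  apply rsum_incr, sq_terms_nonneg. Qed.

Lemma l2_of_rsum x B : (forall n, rsum n (sq_terms x) <= B) -> in_l2 x /\ N2 x <= B.
Proof. intros H.
  assert (E : ex_finite_lim_seq (sum_n (sq_terms x))).
  { apply (ex_finite_lim_seq_incr _ B). intros n. rewrite !sum_n_rsum. apply rsum_incr, sq_terms_nonneg.
    intros n. rewrite sum_n_rsum. apply H. }
  destruct E as [l Hl].
  assert (Hs : is_series (sq_terms x) l) by exact Hl.
  split. exists l; auto.
  unfold N2. rewrite (is_series_unique _ _ Hs).
  assert (Rbar_le l B). { eapply is_lim_seq_le. 2: exact Hl. 2: apply is_lim_seq_const. intros n. rewrite sum_n_rsum. apply H. }
  simpl in H0. auto. Qed.

Lemma N2_nonneg x : in_l2 x -> 0 <= N2 x.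
Proof. intros H. pose proof (l2_rsum_le x 0 H). simpl in H0. auto. Qed.

Lemma l2_win_le x lo hi : in_l2 x -> nsq lo hi x <= N2 x.
Proof. intros H. destruct (Z_le_gt_dec hi lo).
  - unfold nsq. rewrite zsum_nil by lia. apply N2_nonneg; auto.
  - set (n := Z.to_nat (Z.max (Z.abs lo) (Z.abs hi))).
    eapply Rle_trans. 2: apply (l2_rsum_le x n H). rewrite rsum_sq_terms.
    apply zsum_mono; try lia. intros; apply Cmod_sq_nonneg. Qed.

Lemma l2_of_win x B : (forall lo hi, nsq lo hi x <= B) -> in_l2 x /\ N2 x <= B.
Proof. intros H. apply l2_of_rsum. intros n. rewrite rsum_sq_terms. apply H. Qed.

Lemma l2norm_nonneg x : 0 <= l2norm x.
Proof. apply sqrt_pos. Qed.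

Lemma l2norm_sq x : in_l2 x -> l2norm x ^ 2 = N2 x.
Proof. intros H. unfold l2norm. rewrite pow2_sqrt; auto. apply N2_nonneg; auto. Qed.

Lemma l2_win_sqrt x lo hi : in_l2 x -> sqrt (nsq lo hi x) <= l2norm x.
Proof. intros H. apply sqrt_le_1_alt. apply l2_win_le; auto. Qed.

Lemma l2_of_win_sqrt x C : (forall lo hi, sqrt (nsq lo hi x) <= C) -> in_l2 x /\ l2norm x <= C.
Proof. intros H.
  assert (HC : 0 <= C) by (pose proof (H 0%Z 0%Z); pose proof (sqrt_pos (nsq 0 0 x)); lra).
  destruct (l2_of_win x (C ^ 2)) as [H1 H2].
  { intros lo hi. rewrite <- (pow2_sqrt (nsq lo hi x)) by apply nsq_nonneg.
    apply pow_incr. split. apply sqrt_pos. apply H. }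
  split; auto. unfold l2norm. rewrite <- (sqrt_pow2 C) by auto. apply sqrt_le_1_alt; auto. Qed.

Definition supp_in (x : seqZ) lo hi := forall i, (i < lo \/ hi <= i)%Z -> x i = 0%C.

Lemma nsq_supp x lo hi l h : supp_in x lo hi -> (lo <= hi)%Z -> nsq l h x <= nsq lo hi x.
Proof. intros Hs Hlh. destruct (Z_le_gt_dec h l).
  - unfold nsq. rewrite zsum_nil by lia. apply nsq_nonneg.
  - unfold nsq. eapply Rle_trans. apply (zsum_mono (Z.min l lo) (Z.max h hi)); try lia.
    intros; apply Cmod_sq_nonneg.
    rewrite (zsum_supp (Z.min l lo) (Z.max h hi) lo hi); try lia. lra.
    intros i _ Hi. rewrite Hs by lia. rewrite Cmod_0. ring. Qed.

Lemma fin_l2 x lo hi : supp_in x lo hi -> (lo <= hi)%Z -> in_l2 x /\ N2 x = nsq lo hi x.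
Proof. intros Hs Hlh. destruct (l2_of_win x (nsq lo hi x)) as [H1 H2].
  intros; apply nsq_supp; auto. split; auto. apply Rle_antisym; auto. apply l2_win_le; auto. Qed.

Lemma fin_l2norm x lo hi : supp_in x lo hi -> (lo <= hi)%Z -> l2norm x = sqrt (nsq lo hi x).
Proof. intros. unfold l2norm. f_equal. apply fin_l2; auto. Qed.

Lemma l2_add x y : in_l2 x -> in_l2 y -> in_l2 (vadd x y) /\ l2norm (vadd x y) <= l2norm x + l2norm y.
Proof. intros Hx Hy. apply l2_of_win_sqrt. intros lo hi. eapply Rle_trans. apply Minkowski.
  pose proof (l2_win_sqrt x lo hi Hx). pose proof (l2_win_sqrt y lo hi Hy). lra. Qed.

Lemma l2_scal c x : in_l2 x -> in_l2 (vscal c x) /\ l2norm (vscal c x) = Cmod c * l2norm x.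
Proof. intros Hx.
  assert (E : sq_terms (vscal c x) = fun n => Cmod c ^ 2 * sq_terms x n).
  { apply functional_extensionality. intros n. unfold sq_terms, vscal. rewrite !Cmod_mult. ring. }
  split.
  - apply (l2_of_rsum _ (Cmod c ^ 2 * N2 x)). intros n. rewrite E, rsum_scal.
    apply Rmult_le_compat_l. apply pow2_ge_0. apply l2_rsum_le; auto.
  - unfold l2norm. rewrite E, Series_scal_l. rewrite sqrt_mult. rewrite sqrt_pow2. auto.
    apply Cmod_ge_0. apply pow2_ge_0. apply N2_nonneg; auto. Qed.

Lemma vsub_eq x y : vsub x y = vadd x (vscal (-1) y).
Proof. apply functional_extensionality. intros i. unfold vsub, vadd, vscal. ring. Qed.

Lemma l2_sub x y : in_l2 x -> in_l2 y -> in_l2 (vsub x y) /\ l2norm (vsub x y) <= l2norm x + l2norm y.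
Proof. intros Hx Hy. rewrite vsub_eq. destruct (l2_scal (-1) y Hy) as [H1 H2].
  destruct (l2_add x _ Hx H1) as [H3 H4]. split; auto. rewrite H2 in H4.
  replace (Cmod (-1)) with 1 in H4. lra. rewrite Cmod_R, Rabs_left by lra. lra. Qed.

Lemma coord_le x i : in_l2 x -> Cmod (x i) <= l2norm x.
Proof. intros H. eapply Rle_trans. 2: apply (l2_win_sqrt x i (i+1)); auto.
  unfold nsq. rewrite zsum_one. rewrite sqrt_pow2. lra. apply Cmod_ge_0. Qed.

Lemma norm0_zero x : in_l2 x -> l2norm x = 0 -> forall i, x i = 0%C.
Proof. intros H H0 i. apply Cmod_eq_0. pose proof (coord_le x i H). pose proof (Cmod_ge_0 (x i)). lra. Qed.


Lemma bapply_supp a w x lo hi i : banded a w -> supp_in x lo hi ->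
  bapply a w x i = czsum lo hi (fun j => (a i j * x j)%C).
Proof. intros Hb Hs. rewrite bapply_czsum.
  set (g := fun j => (a i j * x j)%C).
  assert (Hg : forall j, ((j < i - Z.of_nat w \/ i + Z.of_nat w + 1 <= j) \/ (j < lo \/ hi <= j))%Z -> g j = 0%C).
  { intros j [Hj|Hj]; unfold g. rewrite Hb by lia. ring. rewrite Hs by lia. ring. }
  set (A := Z.max (i - Z.of_nat w) lo). set (B := Z.min (i + Z.of_nat w + 1) hi).
  destruct (Z_le_gt_dec A B).
  - rewrite (czsum_supp (i - Z.of_nat w) _ A B g) by (try lia; intros; apply Hg; lia).
    rewrite (czsum_supp lo hi A B g) by (try lia; intros; apply Hg; lia). auto.
  - rewrite !czsum_zero; auto; intros; apply Hg; lia. Qed.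

Lemma bapply_add a w x y : bapply a w (vadd x y) = vadd (bapply a w x) (bapply a w y).
Proof. apply functional_extensionality; intros i. unfold vadd at 2. rewrite !bapply_czsum, <- czsum_plus.
  apply czsum_ext. intros. unfold vadd. ring. Qed.
Lemma bapply_scal a w c x : bapply a w (vscal c x) = vscal c (bapply a w x).
Proof. apply functional_extensionality; intros i. unfold vscal at 2. rewrite !bapply_czsum, <- czsum_scal.
  apply czsum_ext. intros. unfold vscal. ring. Qed.
Lemma bapply_sub a w x y : bapply a w (vsub x y) = vsub (bapply a w x) (bapply a w y).
Proof. rewrite !vsub_eq, bapply_add, bapply_scal. auto. Qed.
Lemma bapply_zero a w : bapply a w vzero = vzero.
Proof. apply functional_extensionality; intros i. rewrite bapply_czsum. apply czsum_zero. intros. unfold vzero. ring. Qed.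

Lemma banded_adj a w : banded a w -> banded (adjmat a) w.
Proof. intros H i j Hij. unfold adjmat. rewrite H by lia. apply injective_projections; simpl; lra. Qed.

Lemma adj_adj a : adjmat (adjmat a) = a.
Proof. apply functional_extensionality; intros i. apply functional_extensionality; intros j.
  unfold adjmat. apply Cconj_conj. Qed.

Lemma bapply_supp_out a w x lo hi : banded a w -> supp_in x lo hi -> (lo <= hi)%Z ->
  supp_in (bapply a w x) (lo - Z.of_nat w) (hi + Z.of_nat w).
Proof. intros Hb Hs Hl i Hi. rewrite (bapply_supp a w x lo hi) by auto. apply czsum_zero.
  intros j Hj. rewrite Hb by lia. ring. Qed.

Lemma dotC_czsum_r u lo hi f : dotC u (czsum lo hi f) = zsum lo hi (fun i => dotC u (f i)).
Proof. rewrite dotC_sym, dotC_czsum. apply zsum_ext. intros; apply dotC_sym. Qed.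

Lemma adjoint_id a w x z lx hx lz hz : banded a w -> supp_in x lx hx -> supp_in z lz hz ->
  ip lz hz (bapply a w x) z = ip lx hx x (bapply (adjmat a) w z).
Proof. intros Hb Hx Hz. unfold ip.
  rewrite (zsum_ext lz hz _ (fun i => zsum lx hx (fun j => dotC (x j) (Cconj (a i j) * z i)%C))).
  2:{ intros i _. rewrite (bapply_supp a w x lx hx) by auto. rewrite dotC_czsum. apply zsum_ext.
      intros; apply dotC_mult. }
  rewrite zsum_swap. apply zsum_ext. intros j _.
  rewrite (bapply_supp (adjmat a) w z lz hz) by (auto; apply banded_adj; auto).
  rewrite dotC_czsum_r. apply zsum_ext. intros. unfold adjmat. auto. Qed.

Lemma ip_self lo hi x : ip lo hi x x = nsq lo hi x.
Proof. unfold ip, nsq. apply zsum_ext. intros. rewrite Cmod2_dot. auto. Qed.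

Definition trunc lo hi (x : seqZ) : seqZ :=
  fun i => if andb (Z.leb lo i) (Z.ltb i hi) then x i else 0%C.

Lemma trunc_supp lo hi x : supp_in (trunc lo hi x) lo hi.
Proof. intros i Hi. unfold trunc. destruct (Z.leb_spec lo i), (Z.ltb_spec i hi); simpl; auto; lia. Qed.
Lemma trunc_in lo hi x i : (lo <= i < hi)%Z -> trunc lo hi x i = x i.
Proof. intros Hi. unfold trunc. destruct (Z.leb_spec lo i), (Z.ltb_spec i hi); simpl; auto; lia. Qed.
Lemma trunc_l2 lo hi x : (lo <= hi)%Z -> in_l2 (trunc lo hi x) /\ N2 (trunc lo hi x) = nsq lo hi x.
Proof. intros H. destruct (fin_l2 (trunc lo hi x) lo hi) as [H1 H2]; auto. apply trunc_supp.
  split; auto. rewrite H2. unfold nsq. apply zsum_ext. intros. rewrite trunc_in; auto. Qed.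
Lemma trunc_norm_le lo hi x : (lo <= hi)%Z -> in_l2 x -> l2norm (trunc lo hi x) <= l2norm x.
Proof. intros H Hx. change (sqrt (N2 (trunc lo hi x)) <= l2norm x). rewrite (proj2 (trunc_l2 lo hi x H)). apply l2_win_sqrt; auto. Qed.

Lemma band_bound a w : band_operator a w -> exists M, 0 < M /\
  forall x, in_l2 x -> in_l2 (bapply a w x) /\ l2norm (bapply a w x) <= M * l2norm x.
Proof. intros [_ [M HM]]. exists (Rmax M 1). split. pose proof (Rmax_r M 1). lra.
  intros x Hx. destruct (HM x Hx) as [H1 H2]. split; auto. eapply Rle_trans. apply H2.
  apply Rmult_le_compat_r. apply l2norm_nonneg. apply Rmax_l. Qed.

Lemma band_adj a w : band_operator a w -> band_operator (adjmat a) w.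
Proof. intros Hop. pose proof Hop as [Hb _]. destruct (band_bound a w Hop) as [M [HM0 HM]].
  split. apply banded_adj; auto. exists M. intros z Hz.
  apply l2_of_win_sqrt. intros lo hi.
  destruct (Z_le_gt_dec hi lo).
  { unfold nsq. rewrite zsum_nil by lia. rewrite sqrt_0. apply Rmult_le_pos. lra. apply l2norm_nonneg. }
  set (W := Z.of_nat w).
  set (T := trunc (lo - W) (hi + W) z).
  assert (HT : supp_in T (lo - W) (hi + W)) by apply trunc_supp.
  set (u := bapply (adjmat a) w T).
  assert (Hu : supp_in u (lo - W - W) (hi + W + W)).
  { apply bapply_supp_out; auto. apply banded_adj; auto. lia. }
  assert (E1 : nsq lo hi (bapply (adjmat a) w z) = nsq lo hi u).
  { unfold nsq. apply zsum_ext. intros i Hi. unfold u. f_equal. f_equal.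
    rewrite !bapply_czsum. apply czsum_ext. intros j Hj. unfold T. rewrite trunc_in; auto. unfold W. lia. }
  rewrite E1.
  destruct (fin_l2 u (lo - W - W) (hi + W + W)) as [Hul Hun]; auto. lia.
  destruct (trunc_l2 (lo - W) (hi + W) z) as [HTl HTn]. lia. fold T in HTl, HTn.
  set (s := nsq (lo - W - W) (hi + W + W) u).
  assert (Hs0 : 0 <= s) by apply nsq_nonneg.
  assert (Hs : s <= M * sqrt s * l2norm z).
  { unfold s at 1. rewrite <- ip_self. unfold u at 2.
    rewrite <- (adjoint_id a w u T _ _ (lo - W) (hi + W)); auto.
    eapply Rle_trans. apply CS.
    assert (sqrt (nsq (lo - W) (hi + W) (bapply a w u)) <= M * sqrt s).
    { eapply Rle_trans. apply l2_win_sqrt. apply HM; auto. eapply Rle_trans. apply HM; auto.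
      unfold l2norm, N2 in *. rewrite Hun. fold s. lra. }
    assert (sqrt (nsq (lo - W) (hi + W) T) <= l2norm z).
    { eapply Rle_trans. apply l2_win_sqrt; auto. apply trunc_norm_le; auto. lia. }
    apply Rmult_le_compat; auto; try apply sqrt_pos. }
  eapply Rle_trans. apply sqrt_le_1_alt. apply (nsq_supp u (lo - W - W) (hi + W + W)); auto. lia.
  fold s. destruct (Req_dec s 0) as [E|E].
  { rewrite E, sqrt_0. apply Rmult_le_pos. lra. apply l2norm_nonneg. }
  assert (0 < sqrt s) by (apply sqrt_lt_R0; lra).
  apply (Rmult_le_reg_r (sqrt s)); auto. rewrite sqrt_sqrt by lra. lra.
Qed.


Lemma glb_spec (E : R -> Prop) : (exists r, E r) -> (forall r, E r -> 0 <= r) ->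
  exists g, Glb_Rbar E = Finite g /\ 0 <= g /\ (forall r, E r -> g <= r) /\
    (forall c, (forall r, E r -> c <= r) -> c <= g).
Proof. intros [r0 Hr0] Hpos. destruct (Glb_Rbar_correct E) as [Hlb Hgr].
  destruct (Glb_Rbar E) as [g| |] eqn:Eg.
  - exists g. split; auto. split.
    + specialize (Hgr (Finite 0)). simpl in Hgr. apply Hgr. intros r Hr. simpl. auto.
    + split. intros r Hr. specialize (Hlb r Hr). simpl in Hlb. auto.
      intros c Hc. specialize (Hgr (Finite c)). simpl in Hgr. apply Hgr. intros r Hr. simpl. auto.
  - specialize (Hlb r0 Hr0). simpl in Hlb. contradiction.
  - specialize (Hgr (Finite 0)). simpl in Hgr. exfalso. apply Hgr. intros r Hr. simpl. auto.
Qed.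

Lemma glb_approx (E : R -> Prop) g : (forall c, (forall r, E r -> c <= r) -> c <= g) ->
  forall eps, 0 < eps -> exists r, E r /\ r < g + eps.
Proof. intros H eps He. destruct (Classical_Prop.classic (exists r, E r /\ r < g + eps)) as [H1|H1]; auto.
  exfalso. assert (g + eps <= g). { apply H. intros r Hr. destruct (Rlt_or_le r (g + eps)); auto.
  exfalso; apply H1; eauto. } lra. Qed.

Definition e0 : seqZ := fun i => if Z.eqb i 0 then 1%C else 0%C.
Lemma e0_supp : supp_in e0 0 1.
Proof. intros i Hi. unfold e0. destruct (Z.eqb_spec i 0); auto. lia. Qed.
Lemma e0_l2 : in_l2 e0 /\ l2norm e0 = 1.
Proof. destruct (fin_l2 e0 0 1) as [H1 H2]. apply e0_supp. lia. split; auto.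
  unfold l2norm. fold (N2 e0). rewrite H2. unfold nsq. rewrite (zsum_one 0). unfold e0. simpl.
  rewrite Cmod_1. rewrite !Rmult_1_r. exact sqrt_1. Qed.

Definition nuset a w := fun r => exists x : seqZ, in_l2 x /\ l2norm x = 1 /\ r = l2norm (bapply a w x).

Lemma nu_spec a w : band_operator a w -> exists g, nu a w = g /\ 0 <= g /\
   (forall r, nuset a w r -> g <= r) /\ (forall c, (forall r, nuset a w r -> c <= r) -> c <= g).
Proof. intros Hop. destruct (glb_spec (nuset a w)) as [g [E [H1 [H2 H3]]]].
  - exists (l2norm (bapply a w e0)). exists e0. destruct e0_l2. auto.
  - intros r [x [_ [_ ->]]]. apply l2norm_nonneg.
  - exists g. unfold nu. fold (nuset a w). rewrite E. simpl. auto. Qed.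

Lemma nu_nonneg a w : band_operator a w -> 0 <= nu a w.
Proof. intros H. destruct (nu_spec a w H) as [g [-> [H1 _]]]; auto. Qed.

Lemma nu_approx a w : band_operator a w -> forall eps, 0 < eps ->
  exists x, in_l2 x /\ l2norm x = 1 /\ l2norm (bapply a w x) < nu a w + eps.
Proof. intros H eps He. destruct (nu_spec a w H) as [g [-> [H1 [H2 H3]]]].
  destruct (glb_approx _ _ H3 eps He) as [r [[x [Hx [Hn ->]]] Hr]]. eauto. Qed.

Lemma nu_le a w x : band_operator a w -> in_l2 x -> nu a w * l2norm x <= l2norm (bapply a w x).
Proof. intros Hop Hx. destruct (nu_spec a w Hop) as [g [-> [Hg0 [H2 H3]]]].
  destruct (Req_dec (l2norm x) 0) as [E|E].
  { rewrite E, Rmult_0_r. apply l2norm_nonneg. }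
  pose proof (l2norm_nonneg x) as Hn.
  set (c := / l2norm x).
  destruct (l2_scal c x Hx) as [H4 H5].
  assert (Hc : Cmod c = / l2norm x). { unfold c. rewrite Cmod_R, Rabs_right; auto.
    apply Rle_ge. left. apply Rinv_0_lt_compat. lra. }
  assert (H6 : l2norm (vscal c x) = 1). { rewrite H5, Hc. field. auto. }
  assert (H7 := H2 _ (ex_intro _ (vscal c x) (conj H4 (conj H6 eq_refl)))).
  rewrite bapply_scal in H7. destruct (band_bound a w Hop) as [M [_ HM]].
  destruct (HM x Hx) as [HAx _]. rewrite (proj2 (l2_scal c _ HAx)), Hc in H7.
  apply (Rmult_le_reg_r (/ l2norm x)). apply Rinv_0_lt_compat; lra.
  replace (g * l2norm x * / l2norm x) with g by (field; auto). lra. Qed.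

Lemma trunc_tail x n : in_l2 x -> in_l2 (vsub x (trunc (- Z.of_nat n) (Z.of_nat n) x)) /\
  N2 (vsub x (trunc (- Z.of_nat n) (Z.of_nat n) x)) <= N2 x - nsq (- Z.of_nat n) (Z.of_nat n) x.
Proof. intros Hx. set (m := Z.of_nat n). set (y := vsub x (trunc (- m) m x)).
  apply l2_of_win. intros lo hi.
  destruct (Z_le_gt_dec hi lo).
  { unfold nsq at 1. rewrite zsum_nil by lia. pose proof (l2_win_le x (-m) m Hx). lra. }
  set (L := Z.max (Z.max (Z.abs lo) (Z.abs hi)) m).
  eapply Rle_trans. apply (zsum_mono (-L) L); try lia. intros; apply Cmod_sq_nonneg.
  assert (E : nsq (-L) L y = nsq (-L) L x - nsq (-m) m x).
  { unfold nsq. rewrite (zsum_split (-L) (-m) L) by lia. rewrite (zsum_split (-m) m L) by lia.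
    rewrite (zsum_split (-L) (-m) L (fun i => Cmod (x i) ^ 2)) by lia.
    rewrite (zsum_split (-m) m L (fun i => Cmod (x i) ^ 2)) by lia.
    rewrite (zsum_zero (-m) m). 2:{ intros i Hi. unfold y, vsub. rewrite trunc_in by lia.
      assert (E0 : (x i - x i)%C = RtoC 0) by ring. rewrite E0, Cmod_0. ring. }
    rewrite (zsum_ext (-L) (-m) (fun i => Cmod (y i) ^ 2) (fun i => Cmod (x i) ^ 2)).
    rewrite (zsum_ext m L (fun i => Cmod (y i) ^ 2) (fun i => Cmod (x i) ^ 2)). ring.
    all: intros i Hi; unfold y, vsub; rewrite (trunc_supp (-m) m x) by lia; f_equal; f_equal; ring. }
  fold (nsq (-L) L y). rewrite E. pose proof (l2_win_le x (-L) L Hx). lra. Qed.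

Lemma fin_approx a w : band_operator a w -> forall eps, 0 < eps ->
  exists n : nat, (1 <= n)%nat /\ exists v, supp_in v (- Z.of_nat n) (Z.of_nat n) /\ in_l2 v /\ l2norm v = 1 /\
     l2norm (bapply a w v) <= nu a w + eps.
Proof. intros Hop eps He.
  destruct (nu_approx a w Hop (eps/2) ltac:(lra)) as [x [Hx [Hx1 HAx]]].
  destruct (band_bound a w Hop) as [M [HM0 HM]].
  set (c := l2norm (bapply a w x)).
  assert (Hc : 0 <= c) by apply l2norm_nonneg.
  set (d := (eps / 2) / (M + c + eps / 2)).
  assert (Hd : 0 < d) by (apply Rdiv_lt_0_compat; lra).
  assert (Hd1 : d < 1). { unfold d. apply (Rmult_lt_reg_r (M + c + eps/2)). lra.
    unfold Rdiv. rewrite Rmult_assoc, Rinv_l by lra. lra. }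
  assert (Hlim := l2_lim x Hx). apply is_lim_seq_spec in Hlim.
  destruct (Hlim (mkposreal (d ^ 2) ltac:(apply pow_lt; lra))) as [N HN].
  set (n := S N). exists n. split. unfold n; lia.
  specialize (HN n ltac:(unfold n; lia)). change (Rabs (rsum n (sq_terms x) - N2 x) < d ^ 2) in HN. rewrite rsum_sq_terms in HN.
  set (m := Z.of_nat n) in *. set (T := trunc (-m) m x).
  destruct (trunc_tail x n Hx) as [Hy Hy2]. fold m T in Hy, Hy2.
  assert (Hyn : l2norm (vsub x T) <= d).
  { unfold l2norm. fold (N2 (vsub x T)). rewrite <- (sqrt_pow2 d) by lra. apply sqrt_le_1_alt.
    apply Rabs_def2 in HN. lra. }
  destruct (trunc_l2 (-m) m x) as [HT _]. unfold m; lia. fold T in HT.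
  assert (HTn : 1 - d <= l2norm T).
  { assert (E : x = vadd T (vsub x T)). { apply functional_extensionality; intros i. unfold vadd, vsub. ring. }
    destruct (l2_add T (vsub x T) HT Hy) as [_ H]. rewrite <- E in H. lra. }
  assert (HAT : l2norm (bapply a w T) <= c + M * d).
  { assert (E : bapply a w T = vsub (bapply a w x) (bapply a w (vsub x T))).
    { rewrite bapply_sub. apply functional_extensionality; intros i. unfold vsub. ring. }
    destruct (HM x Hx) as [HAx' _]. destruct (HM _ Hy) as [HAy HAy2].
    rewrite E. eapply Rle_trans. apply l2_sub; auto. unfold c.
    assert (M * l2norm (vsub x T) <= M * d) by (apply Rmult_le_compat_l; lra). lra. }
  assert (HTpos : 0 < l2norm T) by lra.
  set (k := / l2norm T).
  assert (Hk : Cmod k = / l2norm T). { unfold k. rewrite Cmod_R, Rabs_right; auto.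
    apply Rle_ge. left. apply Rinv_0_lt_compat. lra. }
  exists (vscal k T). split.
  { intros i Hi. unfold vscal. rewrite (trunc_supp (-m) m x) by lia. ring. }
  destruct (l2_scal k T HT) as [HkT HkT2]. split; auto. split.
  { rewrite HkT2, Hk. field. lra. }
  rewrite bapply_scal. destruct (HM T HT) as [HATl _]. rewrite (proj2 (l2_scal k _ HATl)), Hk.
  apply (Rmult_le_reg_r (l2norm T)); auto. rewrite Rmult_comm, <- Rmult_assoc, Rinv_r by lra.
  rewrite Rmult_1_l.
  assert (c + M * d <= (c + eps / 2) * (1 - d)).
  { assert (d * (M + c + eps/2) = eps / 2) by (unfold d; field; lra). nra. }
  assert (c < nu a w + eps / 2) by (unfold c; lra).
  assert ((c + eps/2) * (1 - d) <= (nu a w + eps) * l2norm T).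
  { apply Rmult_le_compat; lra. }
  lra.
Qed.


Definition nuNset a w (N : nat) := fun r => exists x : seqZ,
          in_l2 x /\ l2norm x = 1 /\
          (forall i j : Z, x i <> 0%C -> x j <> 0%C -> (Z.abs (i - j) < Z.of_nat N)%Z) /\
          r = l2norm (bapply a w x).

Lemma nuN_spec a w N : (1 <= N)%nat -> exists g, nuN a w N = g /\ 0 <= g /\
   (forall r, nuNset a w N r -> g <= r) /\ (forall c, (forall r, nuNset a w N r -> c <= r) -> c <= g).
Proof. intros HN. destruct (glb_spec (nuNset a w N)) as [g [E [H1 [H2 H3]]]].
  - exists (l2norm (bapply a w e0)). exists e0. destruct e0_l2. split; auto. split; auto. split; auto.
    intros i j Hi Hj. unfold e0 in Hi, Hj. destruct (Z.eqb_spec i 0); destruct (Z.eqb_spec j 0); try tauto. lia.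
  - intros r [x [_ [_ [_ ->]]]]. apply l2norm_nonneg.
  - exists g. unfold nuN. fold (nuNset a w N). rewrite E. simpl. auto. Qed.

Lemma nuN_ge a w N : band_operator a w -> (1 <= N)%nat -> nu a w <= nuN a w N.
Proof. intros Hop HN. destruct (nuN_spec a w N HN) as [g [-> [_ [_ H3]]]]. apply H3.
  intros r [x [H1 [H2 [_ ->]]]]. destruct (nu_spec a w Hop) as [g' [-> [_ [H4 _]]]]. apply H4. exists x. auto. Qed.

Lemma nuN_mono a w N : (1 <= N)%nat -> nuN a w (S N) <= nuN a w N.
Proof. intros HN. destruct (nuN_spec a w N HN) as [g [-> [_ [_ H3]]]]. apply H3.
  intros r [x [H1 [H2 [H4 ->]]]]. destruct (nuN_spec a w (S N) ltac:(lia)) as [g' [-> [_ [H5 _]]]].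
  apply H5. exists x. repeat split; auto. intros i j Hi Hj. specialize (H4 i j Hi Hj). lia. Qed.

Lemma nuN_mono_le a w N N' : (1 <= N)%nat -> (N <= N')%nat -> nuN a w N' <= nuN a w N.
Proof. intros H1 H2. induction H2. lra. pose proof (nuN_mono a w m ltac:(lia)). lra. Qed.

Lemma nuN_fin a w n v : (1 <= n)%nat -> supp_in v (- Z.of_nat n) (Z.of_nat n) -> in_l2 v -> l2norm v = 1 ->
  nuN a w (2 * n) <= l2norm (bapply a w v).
Proof. intros Hn Hs Hv Hv1. destruct (nuN_spec a w (2 * n) ltac:(lia)) as [g [-> [_ [H _]]]].
  apply H. exists v. repeat split; auto. intros i j Hi Hj.
  assert (A1 : (- Z.of_nat n <= i < Z.of_nat n)%Z). { destruct (Z_lt_le_dec i (- Z.of_nat n)). exfalso; apply Hi, Hs; lia.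
    destruct (Z_lt_le_dec i (Z.of_nat n)). lia. exfalso; apply Hi, Hs; lia. }
  assert (A2 : (- Z.of_nat n <= j < Z.of_nat n)%Z). { destruct (Z_lt_le_dec j (- Z.of_nat n)). exfalso; apply Hj, Hs; lia.
    destruct (Z_lt_le_dec j (Z.of_nat n)). lia. exfalso; apply Hj, Hs; lia. }
  lia. Qed.

Lemma conj2 a w : forall N : nat, (1 <= N)%nat -> nuN a w (S N) <= nuN a w N.
Proof. intros. apply nuN_mono; auto. Qed.

Lemma conj3 a w : band_operator a w -> is_lim_seq (fun N => nuN a w N) (nu a w).
Proof. intros Hop. apply is_lim_seq_spec. intros eps.
  destruct (fin_approx a w Hop (eps / 2) ltac:(destruct eps; simpl; lra)) as [n [Hn [v [Hs [Hv [Hv1 HAv]]]]]].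
  exists (2 * n)%nat. intros N HN.
  pose proof (nuN_fin a w n v Hn Hs Hv Hv1).
  pose proof (nuN_mono_le a w (2 * n) N ltac:(lia) HN).
  pose proof (nuN_ge a w N Hop ltac:(lia)).
  destruct eps; simpl in *. apply Rabs_def1; lra. Qed.


Lemma pow_small q : 0 <= q < 1 -> forall eps, 0 < eps -> exists N, forall n, (N <= n)%nat -> q ^ n < eps.
Proof. intros Hq eps He. destruct (pow_lt_1_zero q ltac:(rewrite Rabs_right; lra) eps He) as [N HN].
  exists N. intros n Hn. specialize (HN n Hn). rewrite Rabs_right in HN; auto. apply Rle_ge, pow_le; lra. Qed.

Lemma le_of_pow q a b C k : 0 <= q < 1 -> (forall K, (k <= K)%nat -> a <= b + C * q ^ K) -> a <= b.
Proof. intros Hq H. destruct (Rle_or_lt a b); auto. exfalso.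
  destruct (pow_small q Hq ((a - b) / (Rabs C + 1)) ltac:(apply Rdiv_lt_0_compat; [lra| pose proof (Rabs_pos C); lra])) as [N HN].
  specialize (HN (max N k) ltac:(lia)). specialize (H (max N k) ltac:(lia)).
  set (p := q ^ max N k) in *. assert (0 <= p) by (apply pow_le; lra).
  assert (C * p <= Rabs C * p) by (apply Rmult_le_compat_r; auto; apply Rle_abs).
  assert (p * (Rabs C + 1) < a - b).
  { apply (Rmult_lt_compat_r (Rabs C + 1)) in HN. unfold Rdiv in HN. rewrite Rmult_assoc, Rinv_l in HN. lra.
    pose proof (Rabs_pos C); lra. pose proof (Rabs_pos C); lra. }
  nra. Qed.

Lemma Cmod_le_sum z : Cmod z <= Rabs (fst z) + Rabs (snd z).
Proof. unfold Cmod. rewrite <- (sqrt_square (Rabs (fst z) + Rabs (snd z))).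
  apply sqrt_le_1_alt. rewrite <- (pow2_abs (fst z)), <- (pow2_abs (snd z)).
  pose proof (Rabs_pos (fst z)). pose proof (Rabs_pos (snd z)). nra.
  pose proof (Rabs_pos (fst z)). pose proof (Rabs_pos (snd z)). lra. Qed.

Lemma rsum_const n c : rsum n (fun _ => c) = INR n * c.
Proof. induction n; simpl rsum. simpl; ring. rewrite IHn, S_INR. ring. Qed.

Lemma l2_complete (xs : nat -> seqZ) c q : 0 <= q < 1 -> 0 <= c ->
  (forall k, in_l2 (xs k)) ->
  (forall k, l2norm (vsub (xs (S k)) (xs k)) <= c * q ^ k) ->
  exists x, in_l2 x /\ forall k, in_l2 (vsub x (xs k)) /\ l2norm (vsub x (xs k)) <= c / (1 - q) * q ^ k.
Proof. intros Hq Hc Hl Hd.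
  set (D := fun k => c / (1 - q) * q ^ k).
  assert (HD0 : forall k, 0 <= D k). { intros k. unfold D. apply Rmult_le_pos. apply Rdiv_le_0_compat; lra. apply pow_le; lra. }
  assert (Ha : forall k l, (k <= l)%nat -> in_l2 (vsub (xs l) (xs k)) /\ l2norm (vsub (xs l) (xs k)) <= c * (q ^ k - q ^ l) / (1 - q)).
  { intros k l Hkl. induction Hkl.
    - assert (E : vsub (xs k) (xs k) = vzero). { apply functional_extensionality; intros i. unfold vsub, vzero. ring. }
      rewrite E. destruct (fin_l2 vzero 0 0) as [H1 H2]. intros i _; auto. lia. split; auto.
      unfold l2norm. fold (N2 vzero). rewrite H2. unfold nsq. rewrite zsum_nil by lia. rewrite sqrt_0.
      replace (q ^ k - q ^ k) with 0 by ring. unfold Rdiv. rewrite Rmult_0_r, Rmult_0_l. lra.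
    - assert (E : vsub (xs (S m)) (xs k) = vadd (vsub (xs (S m)) (xs m)) (vsub (xs m) (xs k))).
      { apply functional_extensionality; intros i. unfold vsub, vadd. ring. }
      destruct IHHkl as [H1 H2]. destruct (l2_sub (xs (S m)) (xs m)) as [H3 _]; auto.
      rewrite E. destruct (l2_add _ _ H3 H1) as [H5 H6]. split; auto. eapply Rle_trans. apply H6.
      pose proof (Hd m). simpl pow.
      assert (E2 : c * q ^ m + c * (q ^ k - q ^ m) / (1 - q) = c * (q ^ k - q * q ^ m) / (1 - q)) by (field; lra).
      lra. }
  assert (Ha' : forall k l, (k <= l)%nat -> l2norm (vsub (xs l) (xs k)) <= D k).
  { intros k l Hkl. eapply Rle_trans. apply Ha; auto. unfold D.
    replace (c * (q ^ k - q ^ l) / (1 - q)) with (c / (1 - q) * (q ^ k - q ^ l)) by (field; lra).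
    apply Rmult_le_compat_l. apply Rdiv_le_0_compat; lra.
    assert (0 <= q ^ l) by (apply pow_le; lra). lra. }
  assert (Hb : forall i k l, (k <= l)%nat -> Cmod (xs l i - xs k i)%C <= D k).
  { intros i k l Hkl. eapply Rle_trans. 2: apply Ha'; eauto. apply (coord_le (vsub (xs l) (xs k)) i). apply Ha; auto. }
  assert (HDsmall : forall eps, 0 < eps -> exists N, forall n, (N <= n)%nat -> D n < eps).
  { intros eps He. destruct (Req_dec c 0) as [E|E].
    { exists O. intros. unfold D. rewrite E. unfold Rdiv. rewrite !Rmult_0_l. auto. }
    assert (Hcq : 0 < c / (1 - q)) by (apply Rdiv_lt_0_compat; lra).
    destruct (pow_small q Hq (eps / (c / (1 - q))) ltac:(apply Rdiv_lt_0_compat; lra)) as [N HN].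
    exists N. intros n Hn. specialize (HN n Hn). unfold D.
    apply (Rmult_lt_compat_l (c / (1 - q))) in HN; auto. replace (c / (1 - q) * (eps / (c / (1 - q)))) with eps in HN by (field; lra). auto. }
  assert (Hcv : forall i (pr : C -> R), (forall z, Rabs (pr z) <= Cmod z) -> (forall z1 z2, pr (z1 - z2)%C = pr z1 - pr z2) ->
      ex_finite_lim_seq (fun k => pr (xs k i))).
  { intros i pr Hpr Hlin. apply ex_lim_seq_cauchy_corr. intros eps.
    destruct (HDsmall eps (cond_pos eps)) as [N HN]. exists N. intros n m Hn Hm.
    destruct (le_ge_dec n m).
    - rewrite <- Rabs_Ropp, Ropp_minus_distr, <- Hlin. eapply Rle_lt_trans. apply Hpr. eapply Rle_lt_trans. apply Hb; eauto. apply HN; auto.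
    - rewrite <- Hlin. eapply Rle_lt_trans. apply Hpr. eapply Rle_lt_trans. apply Hb; eauto. apply HN; auto. }
  assert (Hfst : forall z, Rabs (fst z) <= Cmod z). { intros z. apply re_le_Cmod. }
  assert (Hsnd : forall z, Rabs (snd z) <= Cmod z). { intros z. unfold Cmod. rewrite <- sqrt_Rsqr_abs. apply sqrt_le_1_alt. unfold Rsqr. pose proof (pow2_ge_0 (fst z)). simpl. nra. }
  set (x := fun i => (real (Lim_seq (fun k => fst (xs k i))), real (Lim_seq (fun k => snd (xs k i)))) : C).
  assert (Hlim : forall i (pr : C -> R), (forall z, Rabs (pr z) <= Cmod z) -> (forall z1 z2, pr (z1 - z2)%C = pr z1 - pr z2) ->
     ex_finite_lim_seq (fun k => pr (xs k i)) -> forall k, Rabs (real (Lim_seq (fun k => pr (xs k i))) - pr (xs k i)) <= D k).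
  { intros i pr Hpr Hlin [l Hl0] k. rewrite (is_lim_seq_unique _ _ Hl0). simpl.
    apply Rabs_le. split.
    - assert (Rbar_le (pr (xs k i) - D k) l).
      { apply (is_lim_seq_le_loc (fun _ => pr (xs k i) - D k) (fun n => pr (xs n i))). exists k. intros n Hn.
        specialize (Hb i k n Hn). specialize (Hpr (xs n i - xs k i)%C). rewrite Hlin in Hpr.
        apply Rabs_le_between in Hpr. lra. apply is_lim_seq_const. exact Hl0. }
      simpl in H. lra.
    - assert (Rbar_le l (pr (xs k i) + D k)).
      { apply (is_lim_seq_le_loc (fun n => pr (xs n i)) (fun _ => pr (xs k i) + D k)). exists k. intros n Hn.
        specialize (Hb i k n Hn). specialize (Hpr (xs n i - xs k i)%C). rewrite Hlin in Hpr.
        apply Rabs_le_between in Hpr. lra. exact Hl0. apply is_lim_seq_const. }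
      simpl in H. lra. }
  assert (Hco : forall i k, Cmod (x i - xs k i)%C <= 2 * D k).
  { intros i k. eapply Rle_trans. apply Cmod_le_sum. unfold x. simpl.
    pose proof (Hlim i fst Hfst (fun z1 z2 => eq_refl) (Hcv i fst Hfst (fun z1 z2 => eq_refl)) k).
    assert (Hs2 : forall z1 z2 : C, snd (z1 - z2)%C = snd z1 - snd z2) by (intros; simpl; ring).
    pose proof (Hlim i snd Hsnd Hs2 (Hcv i snd Hsnd Hs2) k). unfold Rminus in *. lra. }
  assert (Hw : forall k, in_l2 (vsub x (xs k)) /\ l2norm (vsub x (xs k)) <= D k).
  { intros k. apply l2_of_win_sqrt. intros lo hi.
    apply (le_of_pow q _ _ (2 * (c / (1 - q)) * sqrt (INR (Z.to_nat (hi - lo)))) k Hq).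
    intros K HK.
    assert (E : vsub x (xs k) = vadd (vsub x (xs K)) (vsub (xs K) (xs k))).
    { apply functional_extensionality; intros i. unfold vsub, vadd. ring. }
    rewrite E. eapply Rle_trans. apply Minkowski.
    assert (H1 : sqrt (nsq lo hi (vsub (xs K) (xs k))) <= D k).
    { eapply Rle_trans. apply l2_win_sqrt. apply Ha; auto. apply Ha'; auto. }
    assert (H2 : sqrt (nsq lo hi (vsub x (xs K))) <= 2 * (c / (1 - q)) * sqrt (INR (Z.to_nat (hi - lo))) * q ^ K).
    { assert (nsq lo hi (vsub x (xs K)) <= INR (Z.to_nat (hi - lo)) * (2 * D K) ^ 2).
      { unfold nsq, zsum. rewrite <- rsum_const. apply rsum_le. intros t _. apply pow_incr. split. apply Cmod_ge_0. apply Hco. }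
      eapply Rle_trans. apply sqrt_le_1_alt. apply H. rewrite sqrt_mult. rewrite sqrt_pow2. unfold D. 
      right; ring. pose proof (HD0 K); lra. apply pos_INR. apply pow2_ge_0. }
    lra. }
  exists x. split.
  - assert (E : x = vadd (vsub x (xs O)) (xs O)). { apply functional_extensionality; intros i. unfold vsub, vadd. ring. }
    rewrite E. apply l2_add; auto. apply Hw.
  - intros k. apply Hw.
Qed.


Lemma trunc_conv x : in_l2 x -> forall d, 0 < d -> exists n : nat,
  in_l2 (vsub x (trunc (- Z.of_nat n) (Z.of_nat n) x)) /\ l2norm (vsub x (trunc (- Z.of_nat n) (Z.of_nat n) x)) <= d.
Proof. intros Hx d Hd.
  assert (Hlim := l2_lim x Hx). apply is_lim_seq_spec in Hlim.
  destruct (Hlim (mkposreal (d ^ 2) ltac:(apply pow_lt; lra))) as [N HN].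
  exists N. specialize (HN N (le_n N)).
  change (Rabs (rsum N (sq_terms x) - N2 x) < d ^ 2) in HN. rewrite rsum_sq_terms in HN.
  destruct (trunc_tail x N Hx) as [Hy Hy2]. split; auto.
  unfold l2norm. fold (N2 (vsub x (trunc (- Z.of_nat N) (Z.of_nat N) x))).
  rewrite <- (sqrt_pow2 d) by lra. apply sqrt_le_1_alt. apply Rabs_def2 in HN. lra. Qed.

Definition Lw a w (t : R) (r : seqZ) : seqZ := vsub r (vscal t (bapply a w (bapply (adjmat a) w r))).

Lemma Cmod_sub_scal (x y : C) (t : R) : Cmod (x - t * y)%C ^ 2 = Cmod x ^ 2 - 2 * t * dotC x y + t ^ 2 * Cmod y ^ 2.
Proof. rewrite !Cmod2. unfold dotC. simpl. ring. Qed.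

Lemma nsq_sub_scal lo hi x y (t : R) : nsq lo hi (vsub x (vscal t y)) = nsq lo hi x - 2 * t * ip lo hi x y + t ^ 2 * nsq lo hi y.
Proof. unfold nsq, ip, vsub, vscal. unfold Rminus. rewrite <- !zsum_scal, <- zsum_opp, <- !zsum_plus. apply zsum_ext. intros.
  rewrite Cmod_sub_scal. ring. Qed.

Section Contr.
Variables (a : matZ) (w : nat) (M mu : R).
Hypothesis Hb : banded a w.
Hypothesis HM0 : 0 < M.
Hypothesis HM : forall x, in_l2 x -> in_l2 (bapply a w x) /\ l2norm (bapply a w x) <= M * l2norm x.
Hypothesis Hmu0 : 0 <= mu.
Hypothesis HmuM : mu <= M.
Hypothesis Hmu : forall z, in_l2 z -> mu * l2norm z <= l2norm (bapply (adjmat a) w z).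

Let t := / M ^ 2.

Lemma contr_fin r lo hi : supp_in r lo hi -> (lo <= hi)%Z -> in_l2 (Lw a w t r) /\ N2 (Lw a w t r) <= (1 - mu ^ 2 / M ^ 2) * N2 r.
Proof. intros Hs Hlh. set (W := Z.of_nat w).
  set (u := bapply (adjmat a) w r). set (v := bapply a w u).
  assert (Hu : supp_in u (lo - W) (hi + W)) by (apply bapply_supp_out; auto; apply banded_adj; auto).
  assert (Hv : supp_in v (lo - W - W) (hi + W + W)) by (apply bapply_supp_out; auto; lia).
  assert (HL : supp_in (Lw a w t r) (lo - W - W) (hi + W + W)).
  { intros i Hi. unfold Lw. fold u v. unfold vsub, vscal. rewrite Hv, Hs by lia. ring. }
  destruct (fin_l2 _ _ _ HL) as [HLl HLn]. lia. split; auto. rewrite HLn.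
  unfold Lw. fold u v. rewrite nsq_sub_scal.
  destruct (fin_l2 r lo hi Hs Hlh) as [Hrl Hrn].
  destruct (fin_l2 u _ _ Hu) as [Hul Hun]. lia.
  destruct (fin_l2 v _ _ Hv) as [Hvl Hvn]. lia.
  assert (E1 : nsq (lo - W - W) (hi + W + W) r = N2 r).
  { rewrite Hrn. unfold nsq. apply zsum_supp; try lia. intros i _ Hi. rewrite Hs by lia. rewrite Cmod_0. ring. }
  assert (E2 : ip (lo - W - W) (hi + W + W) r v = N2 u).
  { unfold ip. rewrite (zsum_supp _ _ lo hi) by (try lia; intros i _ Hi; rewrite Hs by lia; unfold dotC; simpl; ring).
    rewrite (zsum_ext _ _ _ (fun i => dotC (v i) (r i))) by (intros; apply dotC_sym). fold (ip lo hi v r).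
    unfold v. rewrite (adjoint_id a w u r (lo - W) (hi + W) lo hi); auto. fold u. rewrite ip_self. auto. }
  rewrite E1, E2, <- Hvn.
  assert (H1 : N2 v <= M ^ 2 * N2 u).
  { rewrite <- (l2norm_sq v), <- (l2norm_sq u) by auto. rewrite <- Rpow_mult_distr. apply pow_incr.
    split. apply l2norm_nonneg. apply HM; auto. }
  assert (H2 : mu ^ 2 * N2 r <= N2 u).
  { rewrite <- (l2norm_sq r), <- (l2norm_sq u) by auto. rewrite <- Rpow_mult_distr. apply pow_incr.
    split. apply Rmult_le_pos; auto. apply l2norm_nonneg. apply Hmu; auto. }
  assert (Ht : t ^ 2 * N2 v <= t * N2 u).
  { assert (Ht0 : 0 < t) by (unfold t; apply Rinv_0_lt_compat, pow_lt; auto).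
    assert (HtM : t * M ^ 2 = 1) by (unfold t; field; lra).
    replace (t ^ 2 * N2 v) with (t * (t * N2 v)) by ring.
    apply Rmult_le_compat_l; [lra|].
    apply Rle_trans with (t * (M ^ 2 * N2 u)). apply Rmult_le_compat_l; lra.
    right. rewrite <- Rmult_assoc, HtM. ring. }
  assert (t * (mu ^ 2 * N2 r) <= t * N2 u). { apply Rmult_le_compat_l; auto. left; unfold t; apply Rinv_0_lt_compat, pow_lt; auto. }
  replace ((1 - mu ^ 2 / M ^ 2) * N2 r) with (N2 r - t * (mu ^ 2 * N2 r)) by (unfold t; field; lra).
  lra.
Qed.

Lemma Lw_add x y : Lw a w t (vadd x y) = vadd (Lw a w t x) (Lw a w t y).
Proof. unfold Lw. rewrite !bapply_add. apply functional_extensionality; intros i. unfold vsub, vadd, vscal. ring. Qed.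

Variable M' : R.
Hypothesis HM'0 : 0 < M'.
Hypothesis HM' : forall x, in_l2 x -> in_l2 (bapply (adjmat a) w x) /\ l2norm (bapply (adjmat a) w x) <= M' * l2norm x.

Lemma Lw_l2 r : in_l2 r -> in_l2 (Lw a w t r) /\ l2norm (Lw a w t r) <= (1 + t * (M * M')) * l2norm r.
Proof. intros Hr. destruct (HM' r Hr) as [H1 H2]. destruct (HM _ H1) as [H3 H4].
  destruct (l2_scal t _ H3) as [H5 H6]. destruct (l2_sub r _ Hr H5) as [H7 H8]. split; auto.
  eapply Rle_trans. apply H8. rewrite H6. rewrite Cmod_R, Rabs_right.
  2:{ apply Rle_ge. left. unfold t. apply Rinv_0_lt_compat, pow_lt; auto. }
  assert (t * l2norm (bapply a w (bapply (adjmat a) w r)) <= t * (M * (M' * l2norm r))).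
  { apply Rmult_le_compat_l. left; unfold t; apply Rinv_0_lt_compat, pow_lt; auto.
    eapply Rle_trans. apply H4. apply Rmult_le_compat_l; lra. }
  lra. Qed.

Lemma contr r : in_l2 r -> in_l2 (Lw a w t r) /\ l2norm (Lw a w t r) <= sqrt (1 - mu ^ 2 / M ^ 2) * l2norm r.
Proof. intros Hr. split. apply Lw_l2; auto.
  set (L := 1 + t * (M * M')).
  assert (HL : 0 < L). { unfold L. assert (0 < t * (M * M')). apply Rmult_lt_0_compat. unfold t; apply Rinv_0_lt_compat, pow_lt; auto. nra. lra. }
  assert (Hq : 0 <= 1 - mu ^ 2 / M ^ 2).
  { assert (mu ^ 2 <= M ^ 2) by (apply pow_incr; lra). 
    assert (mu ^ 2 / M ^ 2 <= 1). { apply (Rmult_le_reg_r (M ^ 2)). apply pow_lt; auto. unfold Rdiv. rewrite Rmult_assoc, Rinv_l. lra. apply pow_nonzero; lra. } lra. }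
  apply (le_of_pow (1/2) _ _ L O ltac:(lra)). intros K _.
  destruct (trunc_conv r Hr ((1/2) ^ K) ltac:(apply pow_lt; lra)) as [n [Hd1 Hd2]].
  set (T := trunc (- Z.of_nat n) (Z.of_nat n) r) in *.
  destruct (trunc_l2 (- Z.of_nat n) (Z.of_nat n) r) as [HT _]. lia. fold T in HT.
  assert (E : r = vadd T (vsub r T)). { apply functional_extensionality; intros i. unfold vadd, vsub. ring. }
  destruct (contr_fin T (- Z.of_nat n) (Z.of_nat n)) as [HLT HLT2]. apply trunc_supp. lia.
  assert (HLTn : l2norm (Lw a w t T) <= sqrt (1 - mu ^ 2 / M ^ 2) * l2norm r).
  { unfold l2norm at 1. fold (N2 (Lw a w t T)). eapply Rle_trans. apply sqrt_le_1_alt. apply HLT2.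
    rewrite sqrt_mult; auto. apply Rmult_le_compat_l. apply sqrt_pos. apply trunc_norm_le; auto. lia.
    apply N2_nonneg; auto. }
  destruct (Lw_l2 _ Hd1) as [H1 H2].
  rewrite E at 1. rewrite Lw_add. eapply Rle_trans. apply l2_add; auto.
  assert (L * l2norm (vsub r T) <= L * (1/2) ^ K) by (apply Rmult_le_compat_l; lra).
  fold L in H2. lra. Qed.
End Contr.


Fixpoint rseq a w (t : R) (y : seqZ) k : seqZ :=
  match k with O => y | S k' => Lw a w t (rseq a w t y k') end.
Fixpoint xseq a w (t : R) (y : seqZ) k : seqZ :=
  match k with O => vzero | S k' => vadd (xseq a w t y k') (vscal t (bapply (adjmat a) w (rseq a w t y k'))) end.

Lemma rseq_inv a w t y k : rseq a w t y k = vsub y (bapply a w (xseq a w t y k)).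
Proof. induction k; simpl.
  - rewrite bapply_zero. apply functional_extensionality; intros i. unfold vsub, vzero. ring.
  - rewrite IHk. unfold Lw. rewrite <- IHk. rewrite bapply_add, bapply_scal.
    apply functional_extensionality; intros i. unfold vsub, vadd, vscal. rewrite IHk. unfold vsub. ring. Qed.

Lemma surj a w : band_operator a w -> 0 < nu (adjmat a) w ->
  forall y, in_l2 y -> exists x, in_l2 x /\ forall i, bapply a w x i = y i.
Proof. intros Hop Hmu y Hy.
  pose proof Hop as [Hb _].
  assert (Hop' := band_adj a w Hop).
  destruct (band_bound a w Hop) as [M0 [HM00 HM0]].
  destruct (band_bound _ _ Hop') as [M' [HM'0 HM']].
  set (mu := nu (adjmat a) w). assert (Hmupos : 0 < mu) by exact Hmu.
  set (M := Rmax M0 mu).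
  assert (HMpos : 0 < M) by (pose proof (Rmax_l M0 mu); unfold M; lra).
  assert (HM : forall x, in_l2 x -> in_l2 (bapply a w x) /\ l2norm (bapply a w x) <= M * l2norm x).
  { intros x Hx. destruct (HM0 x Hx) as [H1 H2]. split; auto. eapply Rle_trans. apply H2.
    apply Rmult_le_compat_r. apply l2norm_nonneg. apply Rmax_l. }
  assert (HmuM : mu <= M) by apply Rmax_r.
  assert (Hmu' : forall z, in_l2 z -> mu * l2norm z <= l2norm (bapply (adjmat a) w z)).
  { intros z Hz. apply nu_le; auto. }
  set (t := / M ^ 2).
  assert (Ht0 : 0 < t) by (unfold t; apply Rinv_0_lt_compat, pow_lt; auto).
  set (q := sqrt (1 - mu ^ 2 / M ^ 2)).
  assert (Hq0 : 0 <= 1 - mu ^ 2 / M ^ 2 < 1).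
  { assert (mu ^ 2 <= M ^ 2) by (apply pow_incr; lra).
    assert (mu ^ 2 / M ^ 2 <= 1). { apply (Rmult_le_reg_r (M ^ 2)). apply pow_lt; auto. unfold Rdiv. rewrite Rmult_assoc, Rinv_l. lra. apply pow_nonzero; lra. }
    assert (0 < mu ^ 2 / M ^ 2). { apply Rdiv_lt_0_compat; apply pow_lt; auto. } lra. }
  assert (Hq : 0 <= q < 1).
  { split. apply sqrt_pos. assert (H := sqrt_lt_1_alt (1 - mu ^ 2 / M ^ 2) 1 Hq0). rewrite sqrt_1 in H. exact H. }
  assert (Hcontr := contr a w M mu Hb HMpos HM ltac:(lra) HmuM Hmu' M' HM'0 HM'). fold t q in Hcontr.
  set (rs := rseq a w t y). set (xs := xseq a w t y).
  assert (Hr : forall k, in_l2 (rs k) /\ l2norm (rs k) <= q ^ k * l2norm y).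
  { induction k. unfold rs; simpl. split; auto. lra. destruct IHk as [H1 H2]. destruct (Hcontr _ H1) as [H3 H4].
    change (rs (S k)) with (Lw a w t (rs k)). simpl pow.
    split; auto. eapply Rle_trans. apply H4. rewrite Rmult_assoc. apply Rmult_le_compat_l; lra. }
  assert (Hxl : forall k, in_l2 (xs k)).
  { induction k. unfold xs; simpl. destruct (fin_l2 vzero 0 0) as [H1 _]; auto. intros i _; auto. lia.
    change (xs (S k)) with (vadd (xs k) (vscal t (bapply (adjmat a) w (rs k)))). apply l2_add; auto. apply l2_scal. apply HM'. apply Hr. }
  set (c := t * M' * l2norm y).
  assert (Hc : 0 <= c). { unfold c. apply Rmult_le_pos. nra. apply l2norm_nonneg. }
  assert (Hd : forall k, l2norm (vsub (xs (S k)) (xs k)) <= c * q ^ k).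
  { intros k. assert (E : vsub (xs (S k)) (xs k) = vscal t (bapply (adjmat a) w (rs k))).
    { change (xs (S k)) with (vadd (xs k) (vscal t (bapply (adjmat a) w (rs k)))).
      apply functional_extensionality; intros i. unfold vsub, vadd, vscal. ring. }
    rewrite E. destruct (Hr k) as [H1 H2]. destruct (HM' _ H1) as [H3 H4]. rewrite (proj2 (l2_scal _ _ H3)).
    rewrite Cmod_R, Rabs_right by lra. unfold c.
    assert (M' * l2norm (rs k) <= M' * (q ^ k * l2norm y)) by (apply Rmult_le_compat_l; lra).
    replace (t * M' * l2norm y * q ^ k) with (t * (M' * (q ^ k * l2norm y))) by ring.
    apply Rmult_le_compat_l; lra. }
  destruct (l2_complete xs c q Hq Hc Hxl Hd) as [x [Hx Hxk]].
  exists x. split; auto. intros i.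
  assert (Hle : Cmod (bapply a w x i - y i)%C <= 0).
  { apply (le_of_pow q _ _ (M * (c / (1 - q)) + l2norm y) O Hq). intros K _.
    assert (E : (bapply a w x i - y i)%C = (bapply a w (vsub x (xs K)) i - rs K i)%C).
    { unfold rs. rewrite rseq_inv. rewrite bapply_sub. unfold vsub. fold xs. ring. }
    rewrite E. eapply Rle_trans. apply Cmod_triangle. rewrite Cmod_opp.
    destruct (Hxk K) as [H1 H2]. destruct (HM _ H1) as [H3 H4].
    pose proof (coord_le _ i H3). pose proof (coord_le (rs K) i (proj1 (Hr K))).
    pose proof (proj2 (Hr K)).
    assert (M * l2norm (vsub x (xs K)) <= M * (c / (1 - q) * q ^ K)) by (apply Rmult_le_compat_l; lra).
    nra. }
  pose proof (Cmod_ge_0 (bapply a w x i - y i)%C).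
  assert (Cmod (bapply a w x i - y i)%C = 0) by lra. apply Cmod_eq_0 in H0.
  replace (bapply a w x i) with ((bapply a w x i - y i) + y i)%C by ring. rewrite H0. ring.
Qed.


Lemma csum_ext n (f g : nat -> C) : (forall k, (k < n)%nat -> f k = g k) -> csum n f = csum n g.
Proof. induction n; simpl; intros H; auto. rewrite IHn by (intros; apply H; lia). rewrite H by lia. auto. Qed.
Lemma csum_zero n (f : nat -> C) : (forall k, (k < n)%nat -> f k = 0%C) -> csum n f = 0%C.
Proof. induction n; simpl; intros H; auto. rewrite IHn by (intros; apply H; lia). rewrite H by lia. ring. Qed.
Lemma csum_plus n (f g : nat -> C) : csum n (fun k => f k + g k)%C = (csum n f + csum n g)%C.
Proof. induction n; simpl. ring. rewrite IHn. ring. Qed.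
Lemma csum_scal n (c : C) (f : nat -> C) : csum n (fun k => c * f k)%C = (c * csum n f)%C.
Proof. induction n; simpl. ring. rewrite IHn. ring. Qed.
Lemma csum_scal_r n (c : C) (f : nat -> C) : csum n (fun k => f k * c)%C = (csum n f * c)%C.
Proof. induction n; simpl. ring. rewrite IHn. ring. Qed.
Lemma csum_opp n (f : nat -> C) : csum n (fun k => - f k)%C = (- csum n f)%C.
Proof. induction n; simpl. ring. rewrite IHn. ring. Qed.

Definition skip (k0 k : nat) : nat := if Nat.ltb k k0 then k else S k.
Definition unskip (k0 k : nat) : nat := if Nat.ltb k k0 then k else pred k.

Lemma skip_neq k0 k : skip k0 k <> k0.
Proof. unfold skip. destruct (Nat.ltb_spec k k0); lia. Qed.
Lemma unskip_skip k0 k : unskip k0 (skip k0 k) = k.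
Proof. unfold skip, unskip. destruct (Nat.ltb_spec k k0). destruct (Nat.ltb_spec k k0); lia.
  destruct (Nat.ltb_spec (S k) k0); lia. Qed.
Lemma skip_lt k0 k p : (k < p)%nat -> (skip k0 k < S p)%nat.
Proof. unfold skip. destruct (Nat.ltb_spec k k0); lia. Qed.

Lemma csum_skip p (h : nat -> C) k0 : (k0 <= p)%nat -> csum (S p) h = (csum p (fun k => h (skip k0 k)) + h k0)%C.
Proof. induction p; intros Hk.
  - assert (k0 = O) by lia. subst. simpl. ring.
  - destruct (Nat.eq_dec k0 (S p)).
    + subst. change (csum (S (S p)) h) with (csum (S p) h + h (S p))%C. f_equal.
      apply csum_ext. intros k Hk'. unfold skip. destruct (Nat.ltb_spec k (S p)); auto; lia.
    + change (csum (S (S p)) h) with (csum (S p) h + h (S p))%C. rewrite IHp by lia.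
      change (csum (S p) (fun k => h (skip k0 k))) with (csum p (fun k => h (skip k0 k)) + h (skip k0 p))%C.
      assert (E : skip k0 p = S p) by (unfold skip; destruct (Nat.ltb_spec p k0); lia). rewrite E. ring. Qed.

Lemma C1_neq_0 : RtoC 1 <> RtoC 0.
Proof. intros H. apply (f_equal (fun z : C => fst z)) in H. simpl in H. lra. Qed.

Lemma lin_dep : forall m p (F : nat -> nat -> C), (m < p)%nat ->
  exists g : nat -> C, (exists k, (k < p)%nat /\ g k <> 0%C) /\
    forall c, (c < m)%nat -> csum p (fun k => g k * F k c)%C = 0%C.
Proof. induction m; intros p F Hp.
  - exists (fun _ => 1%C). split. exists O. split. lia. apply C1_neq_0. intros; lia.
  - destruct (classic (exists k0, (k0 < p)%nat /\ F k0 m <> 0%C)) as [[k0 [Hk0 Hnz]]|Hall].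
    + destruct p as [|p']. lia.
      set (G := fun k c => (F (skip k0 k) c - F (skip k0 k) m / F k0 m * F k0 c)%C).
      destruct (IHm p' G ltac:(lia)) as [g' [[k1 [Hk1 Hg'1]] Hg']].
      set (Sm := csum p' (fun j => g' j * F (skip k0 j) m)%C).
      set (g := fun k => if Nat.eqb k k0 then (- Sm / F k0 m)%C else g' (unskip k0 k)).
      assert (Hgs : forall k, g (skip k0 k) = g' k).
      { intros k. unfold g. destruct (Nat.eqb_spec (skip k0 k) k0). exfalso; eapply skip_neq; eauto. rewrite unskip_skip. auto. }
      assert (Hgk0 : g k0 = (- Sm / F k0 m)%C). { unfold g. rewrite Nat.eqb_refl. auto. }
      exists g. split. exists (skip k0 k1). split. apply skip_lt; auto. rewrite Hgs. auto.
      intros c Hc. rewrite (csum_skip p' _ k0) by lia.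
      rewrite (csum_ext p' _ (fun k => g' k * F (skip k0 k) c)%C) by (intros; rewrite Hgs; auto).
      rewrite Hgk0.
      destruct (Nat.eq_dec c m) as [->|Hcm].
      * fold Sm. field. auto.
      * specialize (Hg' c ltac:(lia)). unfold G in Hg'.
        rewrite (csum_ext p' _ (fun k => g' k * F (skip k0 k) c + - (g' k * F (skip k0 k) m * (F k0 c / F k0 m)))%C) in Hg'
          by (intros; field; auto).
        rewrite csum_plus, csum_opp, csum_scal_r in Hg'. fold Sm in Hg'.
        replace (- Sm / F k0 m * F k0 c)%C with (- (Sm * (F k0 c / F k0 m)))%C by (field; auto).
        rewrite <- Hg'. ring.
    + destruct (IHm p F ltac:(lia)) as [g [Hg1 Hg2]]. exists g. split; auto.
      intros c Hc. destruct (Nat.eq_dec c m) as [->|Hcm].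
      * apply csum_zero. intros k Hk. destruct (Ceq_dec (F k m) 0%C) as [E|E].
        rewrite E. ring. exfalso. apply Hall. eauto.
      * apply Hg2. lia.
Qed.


Definition zshift (s : Z) (v : seqZ) : seqZ := fun i => v (i - s)%Z.

Lemma shift_supp v lo hi s : supp_in v lo hi -> supp_in (zshift s v) (lo + s) (hi + s).
Proof. intros H i Hi. unfold zshift. apply H. lia. Qed.

Lemma shift_N2 v lo hi s : supp_in v lo hi -> (lo <= hi)%Z -> in_l2 (zshift s v) /\ N2 (zshift s v) = N2 v.
Proof. intros H Hl. destruct (fin_l2 _ _ _ (shift_supp v lo hi s H)) as [H1 H2]. lia.
  split; auto. rewrite H2. rewrite (proj2 (fin_l2 v lo hi H Hl)). unfold nsq, zshift.
  rewrite <- zsum_shift. apply zsum_ext. intros. f_equal. f_equal. f_equal. lia. Qed.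

Lemma bapply_shift b w n k' v : banded b w -> same_submatrix b w (2 * n) (- Z.of_nat n - 1) k' ->
  supp_in v (- Z.of_nat n) (Z.of_nat n) ->
  bapply b w (zshift (k' + Z.of_nat n + 1) v) = zshift (k' + Z.of_nat n + 1) (bapply b w v).
Proof. intros Hb Hss Hv. set (s := (k' + Z.of_nat n + 1)%Z). apply functional_extensionality; intros i.
  unfold zshift at 2.
  rewrite (bapply_supp b w _ (- Z.of_nat n + s) (Z.of_nat n + s)) by (auto; apply shift_supp; auto).
  rewrite (bapply_supp b w v (- Z.of_nat n) (Z.of_nat n)) by auto.
  rewrite <- czsum_shift. apply czsum_ext. intros l Hl. unfold zshift.
  replace (l + s - s)%Z with l by lia. f_equal.
  destruct (Z_lt_le_dec (Z.of_nat w) (Z.abs (i - (l + s)))) as [Hf|Hn].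
  - rewrite !Hb by lia. auto.
  - specialize (Hss (i - s + Z.of_nat n + 1)%Z (l + Z.of_nat n + 1)%Z).
    replace (k' + (i - s + Z.of_nat n + 1))%Z with i in Hss by (unfold s; lia).
    replace (k' + (l + Z.of_nat n + 1))%Z with (l + s)%Z in Hss by (unfold s; lia).
    replace (- Z.of_nat n - 1 + (i - s + Z.of_nat n + 1))%Z with (i - s)%Z in Hss by lia.
    replace (- Z.of_nat n - 1 + (l + Z.of_nat n + 1))%Z with l in Hss by lia.
    apply Hss; lia. Qed.

Lemma czsum_csum lo hi f : czsum lo hi f = csum (Z.to_nat (hi - lo)) (fun t => f (lo + Z.of_nat t)%Z).
Proof. rewrite csum_pair. unfold czsum, zsum. auto. Qed.

Lemma csum_split a b (f : nat -> C) : csum (a + b) f = (csum a f + csum b (fun k => f (a + k)%nat))%C.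
Proof. induction b; simpl. rewrite Nat.add_0_r. ring. rewrite Nat.add_succ_r. simpl. rewrite IHb. ring. Qed.

Definition combo d (g : nat -> C) (vs : nat -> seqZ) : seqZ := fun i => csum d (fun k => g k * vs k i)%C.

Lemma bapply_combo b w d g vs : bapply b w (combo d g vs) = combo d g (fun k => bapply b w (vs k)).
Proof. induction d.
  - unfold combo. simpl. apply bapply_zero.
  - assert (E : combo (S d) g vs = vadd (combo d g vs) (vscal (g d) (vs d))).
    { apply functional_extensionality; intros i. reflexivity. }
    rewrite E, bapply_add, bapply_scal, IHd. apply functional_extensionality; intros i. reflexivity. Qed.

Lemma pyth_point d (f : nat -> C) : (forall k l, (k < d)%nat -> (l < d)%nat -> k <> l -> f k = 0%C \/ f l = 0%C) ->
  Cmod (csum d f) ^ 2 = rsum d (fun k => Cmod (f k) ^ 2).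
Proof. induction d; intros H.
  - cbn [csum rsum]. rewrite Cmod_0. ring.
  - cbn [csum rsum]. destruct (Ceq_dec (f d) 0%C) as [E|E].
    + rewrite E, Cmod_0. replace (csum d f + 0)%C with (csum d f) by ring. rewrite IHd. ring.
      intros; apply H; lia.
    + assert (Hz : forall k, (k < d)%nat -> f k = 0%C).
      { intros k Hk. destruct (H k d ltac:(lia) ltac:(lia) ltac:(lia)); auto. contradiction. }
      rewrite csum_zero by auto. rewrite rsum_zero. replace (0 + f d)%C with (f d) by ring. ring.
      intros k Hk. rewrite Hz, Cmod_0 by auto. ring. Qed.

Lemma rsum_ge_term n f k : (forall j, (j < n)%nat -> 0 <= f j) -> (k < n)%nat -> f k <= rsum n f.
Proof. induction n; intros H Hk. lia. simpl. destruct (Nat.eq_dec k n).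
  - subst. assert (0 <= rsum n f) by (apply rsum_nonneg; intros; apply H; lia). lra.
  - assert (f k <= rsum n f) by (apply IHn; auto; lia). pose proof (H n ltac:(lia)). lra. Qed.

Lemma N2_combo d g vs lo hi : (lo <= hi)%Z -> (forall k, (k < d)%nat -> supp_in (vs k) lo hi) ->
  (forall i k l, (k < d)%nat -> (l < d)%nat -> k <> l -> vs k i = 0%C \/ vs l i = 0%C) ->
  in_l2 (combo d g vs) /\ N2 (combo d g vs) = rsum d (fun k => Cmod (g k) ^ 2 * N2 (vs k)).
Proof. intros Hl Hs Hd.
  assert (Hc : supp_in (combo d g vs) lo hi).
  { intros i Hi. unfold combo. apply csum_zero. intros k Hk. rewrite (Hs k Hk) by auto. ring. }
  destruct (fin_l2 _ _ _ Hc Hl) as [H1 H2]. split; auto. rewrite H2.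
  rewrite (rsum_ext d _ (fun k => zsum lo hi (fun i => Cmod (g k * vs k i)%C ^ 2))).
  2:{ intros k Hk. rewrite (proj2 (fin_l2 _ _ _ (Hs k Hk) Hl)). unfold nsq. rewrite <- zsum_scal.
      apply zsum_ext. intros. rewrite Cmod_mult. ring. }
  assert (Sw : rsum d (fun k => zsum lo hi (fun i => Cmod (g k * vs k i)%C ^ 2)) =
     zsum lo hi (fun i => rsum d (fun k => Cmod (g k * vs k i)%C ^ 2))) by (unfold zsum; apply rsum_swap).
  rewrite Sw. unfold nsq. apply zsum_ext. intros i _. unfold combo. apply pyth_point.
  intros k l Hk Hl' Hkl. destruct (Hd i k l Hk Hl' Hkl) as [E|E]; [left|right]; rewrite E; ring. Qed.

Fixpoint iseq (f : Z -> Z) (D : Z) (j : nat) : Z :=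
  match j with O => f 0%Z | S j' => f (Z.abs (iseq f D j') + D)%Z end.

Lemma iseq_grow f D : (0 <= D)%Z -> (forall M, (M < Z.abs (f M))%Z) -> forall j l, (j < l)%nat -> (Z.abs (iseq f D j) + D < Z.abs (iseq f D l))%Z.
Proof. intros HD Hf j l Hjl. induction Hjl.
  - simpl. apply Hf.
  - simpl. specialize (Hf (Z.abs (iseq f D m) + D)%Z). lia. Qed.

Lemma iseq_mono f D : (0 <= D)%Z -> (forall M, (M < Z.abs (f M))%Z) -> forall j l, (j <= l)%nat -> (Z.abs (iseq f D j) <= Z.abs (iseq f D l))%Z.
Proof. intros HD Hf j l Hjl. destruct (Nat.eq_dec j l). subst; lia. pose proof (iseq_grow f D HD Hf j l ltac:(lia)). lia. Qed.


Lemma zero_fun_norm (x : seqZ) : (forall i, x i = 0%C) -> in_l2 x /\ l2norm x = 0.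
Proof. intros H. destruct (fin_l2 x 0 0) as [H1 H2]. intros i _; auto. lia. split; auto.
  unfold l2norm. fold (N2 x). rewrite H2. unfold nsq. rewrite zsum_nil by lia. apply sqrt_0. Qed.

Lemma nu_adj_le b w : band_operator b w -> self_contained b w -> nu (adjmat b) w <= nu b w.
Proof.
  intros Hop Hsc. pose proof Hop as [Hb _]. pose proof (band_adj b w Hop) as Hop'.
  set (al := nu (adjmat b) w). set (be := nu b w).
  destruct (Rle_or_lt al be) as [Hle|Hlt]; auto. exfalso.
  assert (Hbe0 : 0 <= be) by (apply nu_nonneg; auto).
  destruct (fin_approx b w Hop ((al - be) / 2) ltac:(lra)) as [n [Hn1 [v [Hvs [Hvl [Hv1 HBv]]]]]].
  fold be in HBv.
  set (be' := l2norm (bapply b w v)).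
  assert (Hbe' : be' < al) by (unfold be'; lra).
  set (nz := Z.of_nat n). set (wz := Z.of_nat w).
  set (D := (2 * nz + 2 * wz + 1)%Z).
  set (P := fun k' => same_submatrix b w (2 * n) (- nz - 1) k').
  assert (HP : forall M, exists k', (M < Z.abs k')%Z /\ P k') by (intros M; apply Hsc).
  set (f := fun M => proj1_sig (constructive_indefinite_description _ (HP M))).
  assert (Hf1 : forall M, (M < Z.abs (f M))%Z) by (intros M; exact (proj1 (proj2_sig (constructive_indefinite_description _ (HP M))))).
  assert (Hf2 : forall M, P (f M)) by (intros M; exact (proj2 (proj2_sig (constructive_indefinite_description _ (HP M))))).
  set (ks := iseq f D).
  assert (Hks : forall j, P (ks j)). { intros [|j]; simpl; apply Hf2. }
  set (s := fun j => (ks j + nz + 1)%Z).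
  set (vs := fun j => zshift (s j) v).
  set (d := (2 * w + 1)%nat).
  set (Bv := bapply b w v).
  assert (HBvs : forall j, bapply b w (vs j) = zshift (s j) Bv).
  { intros j. unfold vs, s, Bv. apply bapply_shift; auto. apply Hks. }
  assert (HBv_supp : supp_in Bv (- nz - wz) (nz + wz)).
  { unfold Bv. replace (- nz - wz)%Z with (- nz - Z.of_nat w)%Z by auto. apply bapply_supp_out; auto. unfold nz; lia. }
  assert (Hvs_supp : forall j, supp_in (vs j) (- nz - wz + s j) (nz + wz + s j)).
  { intros j i Hi. unfold vs, zshift. apply Hvs. unfold nz in *; lia. }
  assert (HBvs_supp : forall j, supp_in (bapply b w (vs j)) (- nz - wz + s j) (nz + wz + s j)).
  { intros j. rewrite HBvs. apply shift_supp. auto. }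
  assert (Hsep : forall j l, (j < l)%nat -> (D < Z.abs (s j - s l))%Z).
  { intros j l Hjl. pose proof (iseq_grow f D ltac:(unfold D, nz, wz; lia) Hf1 j l Hjl). unfold s. fold ks in H. lia. }
  assert (Hdisj : forall (x : nat -> seqZ), (forall j, supp_in (x j) (- nz - wz + s j) (nz + wz + s j)) ->
            forall i k l, (k < d)%nat -> (l < d)%nat -> k <> l -> x k i = 0%C \/ x l i = 0%C).
  { intros x Hx i k l Hk Hl Hkl.
    assert (Hs : (D < Z.abs (s k - s l))%Z).
    { destruct (Nat.lt_total k l) as [H|[H|H]]. apply Hsep; auto. lia. pose proof (Hsep l k H). lia. }
    destruct (Z_lt_le_dec i (- nz - wz + s k)). left; apply Hx; lia.
    destruct (Z_lt_le_dec i (nz + wz + s k)). 2:{ left; apply Hx; lia. }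
    right. apply Hx. unfold D in Hs. lia. }
  set (K := Z.abs (ks (pred d))).
  assert (HsK : forall j, (j < d)%nat -> (Z.abs (s j) <= K + nz + 1)%Z).
  { intros j Hj. pose proof (iseq_mono f D ltac:(unfold D, nz, wz; lia) Hf1 j (pred d) ltac:(lia)). unfold s, K. fold ks in H. unfold nz. lia. }
  set (Rz := (K + 2 * nz + 2 * wz + 2)%Z).
  set (Rn := Z.to_nat Rz).
  assert (HRn : Z.of_nat Rn = Rz) by (unfold Rn, Rz, K; lia).
  assert (Hwin : forall j, (j < d)%nat -> (- Rz + wz <= - nz - wz + s j)%Z /\ (nz + wz + s j <= Rz - wz)%Z).
  { intros j Hj. specialize (HsK j Hj). unfold Rz. lia. }
  set (m := (2 * Rn)%nat).
  set (p := (d + (2 * Rn - 2 * w))%nat).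
  set (F := fun k c => if Nat.ltb k d then vs k (- Rz + Z.of_nat c)%Z
                       else Cconj (b (- Rz + wz + Z.of_nat (k - d))%Z (- Rz + Z.of_nat c)%Z)).
  destruct (lin_dep m p F ltac:(unfold m, p, d; unfold Rz in HRn; lia)) as [g [[k1 [Hk1 Hgk1]] Hdep]].
  set (V := combo d g vs).
  set (delta := fun u => if andb (Z.leb (- Rz + wz) u) (Z.ltb u (Rz - wz)) then (- g (d + Z.to_nat (u - (- Rz + wz)))%nat)%C else 0%C).
  assert (Hdsupp : supp_in delta (- Rz + wz) (Rz - wz)).
  { intros u Hu. unfold delta. destruct (Z.leb_spec (- Rz + wz) u), (Z.ltb_spec u (Rz - wz)); simpl; auto; lia. }
  assert (HVsupp : supp_in V (- Rz) Rz).
  { intros i Hi. unfold V, combo. apply csum_zero. intros k Hk. destruct (Hwin k Hk).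
    rewrite (Hvs_supp k) by lia. ring. }
  assert (HVeq : V = bapply (adjmat b) w delta).
  { apply functional_extensionality; intros i.
    rewrite (bapply_supp (adjmat b) w delta (- Rz + wz) (Rz - wz)) by (auto; apply banded_adj; auto).
    destruct (Z_lt_le_dec i (- Rz)) as [Hi|Hi].
    { rewrite HVsupp by lia. symmetry. apply czsum_zero. intros u Hu. unfold adjmat. rewrite Hb by (unfold wz in *; lia). unfold Cconj; simpl.
      apply injective_projections; simpl; lra. }
    destruct (Z_lt_le_dec i Rz) as [Hi2|Hi2].
    2:{ rewrite HVsupp by lia. symmetry. apply czsum_zero. intros u Hu. unfold adjmat. rewrite Hb by (unfold wz in *; lia). unfold Cconj; simpl.
      apply injective_projections; simpl; lra. }
    set (c := Z.to_nat (i + Rz)).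
    assert (Hci : (- Rz + Z.of_nat c)%Z = i) by (unfold c; lia).
    specialize (Hdep c ltac:(unfold c, m; lia)).
    unfold p in Hdep. rewrite csum_split in Hdep.
    rewrite (csum_ext d _ (fun k => g k * vs k i)%C) in Hdep.
    2:{ intros k Hk. unfold F. destruct (Nat.ltb_spec k d); try lia. rewrite Hci. auto. }
    rewrite (csum_ext (2 * Rn - 2 * w) _ (fun t => g (d + t)%nat * Cconj (b (- Rz + wz + Z.of_nat t)%Z i))%C) in Hdep.
    2:{ intros t Ht. unfold F. destruct (Nat.ltb_spec (d + t) d); try lia. rewrite Hci.
        replace (d + t - d)%nat with t by lia. auto. }
    rewrite czsum_csum. replace (Z.to_nat (Rz - wz - (- Rz + wz))) with (2 * Rn - 2 * w)%nat by (unfold wz; lia).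
    rewrite (csum_ext (2 * Rn - 2 * w) _ (fun t => - (g (d + t)%nat * Cconj (b (- Rz + wz + Z.of_nat t)%Z i)))%C).
    2:{ intros t Ht. unfold adjmat, delta. destruct (Z.leb_spec (- Rz + wz) (- Rz + wz + Z.of_nat t)), (Z.ltb_spec (- Rz + wz + Z.of_nat t) (Rz - wz)); simpl; try (unfold wz in *; lia).
        replace (Z.to_nat (- Rz + wz + Z.of_nat t - (- Rz + wz))) with t by lia. ring. }
    rewrite csum_opp. unfold V, combo. 
    replace (csum d (fun k => g k * vs k i)%C) with ((csum d (fun k => g k * vs k i) + csum (2 * Rn - 2 * w) (fun t => g (d + t)%nat * Cconj (b (- Rz + wz + Z.of_nat t)%Z i))) - csum (2 * Rn - 2 * w) (fun t => g (d + t)%nat * Cconj (b (- Rz + wz + Z.of_nat t)%Z i)))%C by ring.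
    rewrite Hdep. ring. }
  destruct (classic (forall k, (k < d)%nat -> g k = 0%C)) as [Hall|Hnot].
  -
    assert (HV0 : forall i, V i = 0%C). { intros i. unfold V, combo. apply csum_zero. intros k Hk. rewrite Hall by auto. ring. }
    destruct (zero_fun_norm _ HV0) as [_ HVn]. rewrite HVeq in HVn.
    destruct (fin_l2 delta _ _ Hdsupp) as [Hdl _]. unfold Rz; lia.
    pose proof (nu_le (adjmat b) w delta Hop' Hdl) as Hnl. fold al in Hnl. rewrite HVn in Hnl.
    assert (Hal0 : 0 < al) by (pose proof (nu_nonneg b w Hop); unfold be in *; lra).
    assert (Hdn : l2norm delta = 0). { pose proof (l2norm_nonneg delta). nra. }
    pose proof (norm0_zero delta Hdl Hdn) as Hd0.
    destruct (Nat.lt_ge_cases k1 d) as [Hk1d|Hk1d]. { apply Hgk1. apply Hall; auto. }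
    set (t := (k1 - d)%nat).
    specialize (Hd0 (- Rz + wz + Z.of_nat t)%Z). unfold delta in Hd0.
    destruct (Z.leb_spec (- Rz + wz) (- Rz + wz + Z.of_nat t)), (Z.ltb_spec (- Rz + wz + Z.of_nat t) (Rz - wz)); simpl in Hd0;
      try (unfold t, p, wz in *; lia).
    replace (d + Z.to_nat (- Rz + wz + Z.of_nat t - (- Rz + wz)))%nat with k1 in Hd0 by (unfold t; lia).
    apply Hgk1. replace (g k1) with (- - g k1)%C by ring. rewrite Hd0. ring.
  - apply not_all_ex_not in Hnot. destruct Hnot as [k0 Hk0]. apply Classical_Prop.imply_to_and in Hk0. destruct Hk0 as [Hk0d Hgk0].
    set (G := rsum d (fun k => Cmod (g k) ^ 2)).
    assert (HG : 0 < G).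
    { eapply Rlt_le_trans. 2: apply (rsum_ge_term d _ k0); auto. apply pow_lt. apply Cmod_gt_0; auto.
      intros; apply pow2_ge_0. }
    assert (Hvn : forall k, N2 (vs k) = 1).
    { intros k. unfold vs. rewrite (proj2 (shift_N2 v _ _ (s k) Hvs ltac:(unfold nz; lia))).
      rewrite <- (l2norm_sq v) by auto. rewrite Hv1. ring. }
    assert (HBvn : forall k, N2 (bapply b w (vs k)) = be' ^ 2).
    { intros k. rewrite HBvs. rewrite (proj2 (shift_N2 Bv _ _ (s k) HBv_supp ltac:(unfold nz; lia))).
      unfold be', Bv. rewrite l2norm_sq; auto. destruct (band_bound b w Hop) as [M [_ HM]]. apply HM; auto. }
    destruct (N2_combo d g vs (- Rz) Rz ltac:(unfold Rz; lia)) as [HVl HVn].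
    { intros k Hk i Hi. destruct (Hwin k Hk). apply Hvs_supp. lia. }
    { intros i k l Hk Hl Hkl. apply (Hdisj vs Hvs_supp i k l Hk Hl Hkl). }
    fold V in HVl, HVn.
    rewrite (rsum_ext d _ (fun k => Cmod (g k) ^ 2)) in HVn by (intros; rewrite Hvn; ring). fold G in HVn.
    set (BV := bapply b w V).
    assert (HBVc : BV = combo d g (fun k => bapply b w (vs k))) by (unfold BV, V; apply bapply_combo).
    destruct (N2_combo d g (fun k => bapply b w (vs k)) (- Rz) Rz ltac:(unfold Rz; lia)) as [HBVl HBVn].
    { intros k Hk i Hi. destruct (Hwin k Hk). apply HBvs_supp. lia. }
    { intros i k l Hk Hl Hkl. apply (Hdisj _ HBvs_supp i k l Hk Hl Hkl). }
    rewrite <- HBVc in HBVl, HBVn.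
    rewrite (rsum_ext d _ (fun k => be' ^ 2 * Cmod (g k) ^ 2)) in HBVn by (intros; rewrite HBvn; ring).
    rewrite rsum_scal in HBVn. fold G in HBVn.
    destruct (fin_l2 delta _ _ Hdsupp) as [Hdl _]. unfold Rz; lia.
    assert (HVsupp2 : supp_in V (- Rz) Rz) by auto.
    assert (E1 : G = ip (- Rz + wz) (Rz - wz) delta BV).
    { rewrite <- HVn. rewrite (proj2 (fin_l2 V _ _ HVsupp ltac:(unfold Rz; lia))). rewrite <- ip_self.
      assert (E : ip (- Rz) Rz V V = ip (- Rz) Rz (bapply (adjmat b) w delta) V) by (rewrite <- HVeq; auto).
      rewrite E. rewrite (adjoint_id (adjmat b) w delta V (- Rz + wz) (Rz - wz) (- Rz) Rz); auto.
      rewrite adj_adj. auto. apply banded_adj; auto. }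
    assert (H1 : G <= l2norm delta * l2norm BV).
    { rewrite E1. eapply Rle_trans. apply CS. apply Rmult_le_compat; try apply sqrt_pos; apply l2_win_sqrt; auto. }
    assert (HBVn' : l2norm BV = be' * sqrt G).
    { unfold l2norm. fold (N2 BV). rewrite HBVn. rewrite sqrt_mult. rewrite sqrt_pow2. auto.
      unfold be'; apply l2norm_nonneg. apply pow2_ge_0. lra. }
    assert (HVn' : l2norm V = sqrt G) by (unfold l2norm; fold (N2 V); rewrite HVn; auto).
    pose proof (nu_le (adjmat b) w delta Hop' Hdl) as Hnl. fold al in Hnl. rewrite <- HVeq, HVn' in Hnl.
    assert (HsG : 0 < sqrt G) by (apply sqrt_lt_R0; auto).
    assert (Hbe'0 : 0 <= be') by apply l2norm_nonneg.
    assert (Hdn0 : 0 <= l2norm delta) by apply l2norm_nonneg.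
    rewrite HBVn' in H1.
    assert (G = sqrt G * sqrt G) by (rewrite sqrt_sqrt; lra).
    assert (al * G <= be' * G).
    { assert (al * G <= al * (l2norm delta * (be' * sqrt G))) by (apply Rmult_le_compat_l; lra).
      assert (al * l2norm delta * (be' * sqrt G) <= sqrt G * (be' * sqrt G)) by (apply Rmult_le_compat_r; nra).
      nra. }
    assert (al <= be') by (apply (Rmult_le_reg_r G); lra). lra.
Qed.


Lemma sc_adj a w : self_contained a w -> self_contained (adjmat a) w.
Proof. intros H N k M. destruct (H (N + 2 * w)%nat (k - Z.of_nat w)%Z (M + Z.of_nat w)%Z) as [k'' [Hk'' Hss]].
  exists (k'' + Z.of_nat w)%Z. split. lia.
  intros i j Hi Hj. unfold adjmat. f_equal.
  specialize (Hss (j + Z.of_nat w)%Z (i + Z.of_nat w)%Z ltac:(lia) ltac:(lia)).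
  replace (k'' + Z.of_nat w + j)%Z with (k'' + (j + Z.of_nat w))%Z by lia.
  replace (k'' + Z.of_nat w + i)%Z with (k'' + (i + Z.of_nat w))%Z by lia.
  rewrite Hss. f_equal; lia. Qed.

Lemma conj1 a w : band_operator a w -> self_contained a w -> nu a w = nu (adjmat a) w.
Proof. intros Hop Hsc. apply Rle_antisym.
  - pose proof (nu_adj_le (adjmat a) w (band_adj a w Hop) (sc_adj a w Hsc)). rewrite adj_adj in H. auto.
  - apply nu_adj_le; auto. Qed.

Lemma bapply_ext a w x y : (forall i, bapply a w x i = y i) -> bapply a w x = y.
Proof. intros H. apply functional_extensionality; auto. Qed.

Lemma Cmod_Rpos (x : R) : 0 <= x -> Cmod (RtoC x) = x.
Proof. intros H. unfold Cmod, RtoC. simpl. replace (x * (x * 1) + 0 * (0 * 1)) with (x ^ 2) by ring. apply sqrt_pow2; auto. Qed.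

Lemma normalize a w x1 : band_operator a w -> in_l2 x1 -> 0 < l2norm (bapply a w x1) ->
  let c := l2norm (bapply a w x1) in
  in_l2 (vscal (/ c) x1) /\ l2norm (vscal (/ c) x1) = l2norm x1 / c /\
  in_l2 (vscal (/ c) (bapply a w x1)) /\ l2norm (vscal (/ c) (bapply a w x1)) = 1 /\
  bapply a w (vscal (/ c) x1) = vscal (/ c) (bapply a w x1).
Proof. intros Hop Hx Hc c. assert (Hc' : 0 < c) by exact Hc. destruct (band_bound a w Hop) as [M [_ HM]]. destruct (HM x1 Hx) as [HAx _].
  assert (Hcm : Cmod (Cinv (RtoC c)) = / c).
  { assert (Hc0 : RtoC c <> 0%C). { intros E. apply (f_equal (fun z : C => fst z)) in E. simpl in E. lra. }
    rewrite (Cmod_inv _ Hc0). rewrite Cmod_Rpos. auto. lra. }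
  destruct (l2_scal (/ c) x1 Hx) as [H1 H2]. destruct (l2_scal (/ c) _ HAx) as [H3 H4].
  repeat split; auto.  rewrite H2, Hcm. unfold Rdiv. ring. rewrite H4, Hcm. fold c. field. unfold c; lra.
  apply bapply_scal. Qed.

Lemma conj4 a w : band_operator a w -> nu a w = nu (adjmat a) w -> nu a w = recip_inv_norm a w.
Proof. intros Hop Hadj. pose proof (nu_nonneg a w Hop) as Hnu0.
  unfold recip_inv_norm. destruct (excluded_middle_informative (invertible a w)) as [Hinv|Hninv].
  2:{ destruct (Req_dec (nu a w) 0) as [E|E]; auto. exfalso. apply Hninv. intros y Hy.
      destruct (surj a w Hop ltac:(rewrite <- Hadj; lra) y Hy) as [x [Hx HAx]].
      exists x. repeat split; auto. intros x' Hx' HAx' i.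
      destruct (l2_sub x' x Hx' Hx) as [Hd _].
      pose proof (nu_le a w _ Hop Hd) as Hn. rewrite bapply_sub in Hn.
      assert (Hz : forall i, vsub (bapply a w x') (bapply a w x) i = 0%C). { intros j. unfold vsub. rewrite HAx, HAx'. ring. }
      destruct (zero_fun_norm _ Hz) as [_ Hz2]. rewrite Hz2 in Hn.
      assert (l2norm (vsub x' x) = 0). { pose proof (l2norm_nonneg (vsub x' x)). nra. }
      pose proof (norm0_zero _ Hd H i). unfold vsub in H0. replace (x' i) with ((x' i - x i) + x i)%C by ring. rewrite H0. ring. }
  set (E := fun r => exists y : seqZ, in_l2 y /\ l2norm y = 1 /\
     exists x : seqZ, in_l2 x /\ (forall i, bapply a w x i = y i) /\ r = l2norm x).
  assert (Hinj : forall x1, in_l2 x1 -> l2norm x1 = 1 -> 0 < l2norm (bapply a w x1)).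
  { intros x1 Hx1 Hn1. destruct (Rle_or_lt (l2norm (bapply a w x1)) 0) as [H|H]; auto. exfalso.
    assert (H0 : l2norm (bapply a w x1) = 0) by (pose proof (l2norm_nonneg (bapply a w x1)); lra).
    destruct (band_bound a w Hop) as [M [_ HM]]. destruct (HM x1 Hx1) as [HAx _].
    pose proof (norm0_zero _ HAx H0) as Hz.
    destruct (Hinv vzero (proj1 (zero_fun_norm vzero (fun _ => eq_refl)))) as [x [Hx [HAx' Hu]]].
    assert (forall i, x1 i = x i) by (apply Hu; auto).
    assert (forall i, vzero i = x i). { apply Hu. apply (zero_fun_norm vzero (fun _ => eq_refl)). intros i. rewrite bapply_zero. auto. }
    assert (forall i, x1 i = 0%C). { intros i. rewrite H1, <- H2. auto. }
    destruct (zero_fun_norm _ H3). lra. }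
  assert (Hel : forall x1, in_l2 x1 -> l2norm x1 = 1 -> E (/ l2norm (bapply a w x1))).
  { intros x1 Hx1 Hn1. pose proof (Hinj x1 Hx1 Hn1) as Hc.
    destruct (normalize a w x1 Hop Hx1 Hc) as [H1 [H2 [H3 [H4 H5]]]].
    exists (vscal (/ l2norm (bapply a w x1)) (bapply a w x1)). split; auto. split; auto.
    exists (vscal (/ l2norm (bapply a w x1)) x1). split; auto. split. rewrite H5; auto.
    rewrite H2, Hn1. unfold Rdiv. ring. }
  destruct (Req_dec (nu a w) 0) as [Hz|Hpos].
  -
    destruct (inv_norm a w) as [r| |] eqn:Er; auto. exfalso.
    pose proof (Lub_Rbar_correct E) as [Hub _]. unfold inv_norm in Er. fold E in Er. rewrite Er in Hub.
    destruct (nu_spec a w Hop) as [g [Eg [_ [_ H3]]]].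
    destruct (band_bound a w Hop) as [M [_ HM]].
    destruct e0_l2 as [He0 He01].
    assert (Hr : 0 < r). { pose proof (Hub _ (Hel e0 He0 He01)). simpl in H. pose proof (Hinj e0 He0 He01).
      assert (0 < / l2norm (bapply a w e0)) by (apply Rinv_0_lt_compat; auto). lra. }
    assert (/ r <= g).
    { apply H3. intros r0 [x1 [Hx1 [Hn1 ->]]]. pose proof (Hub _ (Hel x1 Hx1 Hn1)). simpl in H.
      pose proof (Hinj x1 Hx1 Hn1). apply (Rmult_le_reg_r r); auto. rewrite Rinv_l by lra.
      apply (Rmult_le_reg_l (/ l2norm (bapply a w x1))). apply Rinv_0_lt_compat; auto.
      rewrite Rmult_1_r. rewrite <- Rmult_assoc, Rinv_l by lra. lra. }
    assert (0 < / r) by (apply Rinv_0_lt_compat; auto). lra.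
  -
    assert (Hnp : 0 < nu a w) by lra.
    assert (Hl : inv_norm a w = Finite (1 / nu a w)).
    { unfold inv_norm. fold E. apply is_lub_Rbar_unique. split.
      - intros r [y [Hy [Hy1 [x [Hx [HAx ->]]]]]]. simpl.
        pose proof (nu_le a w x Hop Hx). rewrite (bapply_ext a w x y HAx), Hy1 in H.
        apply (Rmult_le_reg_l (nu a w)); auto. field_simplify; lra.
      - intros b Hb. destruct b as [b| |]; simpl; auto.
        + destruct (Rle_or_lt (1 / nu a w) b); auto. exfalso.
          destruct (nu_approx a w Hop (/ b - nu a w)) as [x1 [Hx1 [Hn1 Hlt]]].
          { assert (0 < b). { pose proof (Hb _ (Hel e0 (proj1 e0_l2) (proj2 e0_l2))). simpl in H0.
              pose proof (Hinj e0 (proj1 e0_l2) (proj2 e0_l2)). assert (0 < / l2norm (bapply a w e0)) by (apply Rinv_0_lt_compat; auto). lra. }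
            apply (Rmult_lt_reg_l b); auto. rewrite Rmult_minus_distr_l, Rinv_r by lra.
            apply (Rmult_lt_compat_l (nu a w)) in H; auto. unfold Rdiv in H. rewrite Rmult_1_l, Rinv_r in H by lra. lra. }
          pose proof (Hb _ (Hel x1 Hx1 Hn1)). simpl in H0.
          pose proof (Hinj x1 Hx1 Hn1).
          assert (0 < b) by (assert (0 < / l2norm (bapply a w x1)) by (apply Rinv_0_lt_compat; auto); lra).
          replace (nu a w + (/ b - nu a w)) with (/ b) in Hlt by ring.
          apply Rinv_lt_contravar in Hlt. rewrite Rinv_inv in Hlt. lra. apply Rmult_lt_0_compat; auto. apply Rinv_0_lt_compat; auto.
        + exfalso. pose proof (Hb _ (Hel e0 (proj1 e0_l2) (proj2 e0_l2))). simpl in H. auto. }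
    rewrite Hl. field. lra.
Qed.

Theorem lemma3p4 (a : matZ) (w : nat) :
  band_operator a w ->
  self_contained a w ->
  nu a w = nu (adjmat a) w /\
  (forall N : nat, (1 <= N)%nat -> nuN a w (S N) <= nuN a w N) /\
  is_lim_seq (fun N => nuN a w N) (nu a w) /\
  nu a w = recip_inv_norm a w.
Proof. intros Hop Hsc. pose proof (conj1 a w Hop Hsc) as H1. split; auto. split. apply conj2. split. apply conj3; auto.
  apply conj4; auto. Qed.
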